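(* Let $\Lambda\in(\mathbb{R}\setminus\{0\})^n$ and let $h$ be a real-valued function in $C^{1,1}_{\mathrm{loc}}(\mathbb{C}^n)$, and set $P=2\mathbf{i}\,\partial h/\partial\bar z$. Then the limit $$\langle h\rangle(a)=\lim_{T\to\pm\infty}\frac{1}{|T|}\int_0^T h(\Phi_{-\Lambda t}a)\,dt$$ exists for all $a\in\mathbb{C}^n$, $\langle h\rangle\in C^{1,1}_{\mathrm{loc}}(\mathbb{C}^n)$, and for every $1\le j\le n$, $$2\mathbf{i}\frac{\partial}{\partial\bar a_j}\langle h\rangle(a)=\langle\langle P\rangle\rangle_j(a).$$ That is, the effective equation $\partial_\tau a=\langle\langle P\rangle\rangle(a)$ is Hamiltonian with Hamiltonian $\langle h\rangle$.
   Context: $C^{1,1}_{\mathrm{loc}}(\mathbb{C}^n)=\{u\in C^1(\mathbb{C}^n): u_z,u_{\bar z}\text{ are locally Lipschitz}\}$. $\partial/\partial\bar z_j=\frac12(\partial_{x_j}+\mathbf{i}\partial_{y_j})$ for $z_j=x_j+\mathbf{i}y_j$. $\Phi_w=\mathrm{diag}(e^{\mathbf{i}w_1},\dots,e^{\mathbf{i}w_n})$. $\langle\langle P\rangle\rangle(a)=\lim_{T\to\pm\infty}\frac1{|T|}\int_0^T\Phi_{\Lambda t}P(\Phi_{-\Lambda t}a)\,dt$ (for $T<0$, $\int_0^T$ means $\int_T^0$). *)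

(* Defs.v *)
From Stdlib Require Import Reals.
From mathcomp Require Import ssreflect ssrbool eqtype ssrnat fintype.
Open Scope R_scope.

(* Complex numbers as pairs (Re, Im). *)
Definition C : Type := (R * R)%type.
Definition Cmul (z w : C) : C :=
  (fst z * fst w - snd z * snd w, fst z * snd w + snd z * fst w).
Definition Csub (z w : C) : C := (fst z - fst w, snd z - snd w).
Definition Cnorm (z : C) : R := sqrt (fst z ^ 2 + snd z ^ 2).
Definition Cexpi (th : R) : C := (cos th, sin th).

Definition Cn (n : nat) : Type := 'I_n -> C.

Definition Phi {n : nat} (w : 'I_n -> R) (a : Cn n) : Cn n :=
  fun j => Cmul (Cexpi (w j)) (a j).

Definition upd {n : nat} (a : Cn n) (j : 'I_n) (c : C) : Cn n :=
  fun k => if k == j then c else a k.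

Definition pd_x {n : nat} (f : Cn n -> R) (a : Cn n) (j : 'I_n) (l : R) : Prop :=
  derivable_pt_lim (fun s => f (upd a j (s, snd (a j)))) (fst (a j)) l.
Definition pd_y {n : nat} (f : Cn n -> R) (a : Cn n) (j : 'I_n) (l : R) : Prop :=
  derivable_pt_lim (fun s => f (upd a j (fst (a j), s))) (snd (a j)) l.

Definition partials {n : nat} (f : Cn n -> R) (fx fy : 'I_n -> Cn n -> R) : Prop :=
  forall (a : Cn n) (j : 'I_n), pd_x f a j (fx j a) /\ pd_y f a j (fy j a).

Definition near {n : nat} (d : R) (a b : Cn n) : Prop :=
  forall k, Rabs (fst (b k) - fst (a k)) < d /\ Rabs (snd (b k) - snd (a k)) < d.

Definition continuous_Cn {n : nat} (g : Cn n -> R) : Prop :=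
  forall (a : Cn n) (eps : R), 0 < eps ->
    exists d, 0 < d /\ forall b, near d a b -> Rabs (g b - g a) < eps.

(* locally Lipschitz (w.r.t. the sup norm on C^n = R^{2n}) complex-valued map:
   |g b - g c| <= L * d whenever every real coordinate of b - c is <= d *)
Definition loc_lipschitz {n : nat} (g : Cn n -> C) : Prop :=
  forall a : Cn n, exists r L, 0 < r /\
    forall b c, near r a b -> near r a c ->
      forall d, (forall k, Rabs (fst (b k) - fst (c k)) <= d /\
                           Rabs (snd (b k) - snd (c k)) <= d) ->
        Cnorm (Csub (g b) (g c)) <= L * d.

(* d/dz_j u = (u_x - i u_y)/2,  d/dzbar_j u = (u_x + i u_y)/2  for real-valued u *)
Definition dz_of {n : nat} (fx fy : 'I_n -> Cn n -> R) (j : 'I_n) (a : Cn n) : C :=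
  (fx j a / 2, - fy j a / 2).
Definition dzbar_of {n : nat} (fx fy : 'I_n -> Cn n -> R) (j : 'I_n) (a : Cn n) : C :=
  (fx j a / 2, fy j a / 2).

(* real-valued u in C^{1,1}_loc(C^n): C^1 (continuous partials) with
   u_z, u_zbar locally Lipschitz *)
Definition C11loc {n : nat} (u : Cn n -> R) : Prop :=
  exists fx fy : 'I_n -> Cn n -> R,
    partials u fx fy /\
    (forall j, continuous_Cn (fx j) /\ continuous_Cn (fy j)) /\
    (forall j, loc_lipschitz (dz_of fx fy j) /\ loc_lipschitz (dzbar_of fx fy j)).

Definition has_int (f : R -> R) (a b v : R) : Prop :=
  exists pr : Riemann_integrable f a b, RiemannInt pr = v.

(* lim_{T -> +-oo} (1/|T|) int_0^T f(t) dt = L, where for T < 0 the integral is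
   over [T,0]; both limits T -> +oo and T -> -oo exist and equal L. *)
Definition time_avg_cv (f : R -> R) (L : R) : Prop :=
  forall eps, 0 < eps -> exists M, 0 < M /\
    forall T, M < Rabs T -> exists v,
      has_int f (Rmin 0 T) (Rmax 0 T) v /\ Rabs (v / Rabs T - L) < eps.

(* P = 2 i dh/dzbar, i.e. P_j = i (h_x + i h_y) = (- h_y, h_x) *)
Definition Pvf {n : nat} (hx hy : 'I_n -> Cn n -> R) (b : Cn n) : Cn n :=
  fun j => (- hy j b, hx j b).

Definition flow_integrand {n : nat} (Lam : 'I_n -> R) (hx hy : 'I_n -> Cn n -> R)
  (a : Cn n) (t : R) : Cn n :=
  Phi (fun j => Lam j * t) (Pvf hx hy (Phi (fun j => - (Lam j * t)) a)).

(* Main.v *)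
Require Import Defs.
From Stdlib Require Import Reals Lra Lia ZArith List FunctionalExtensionality ClassicalEpsilon Classical.
From mathcomp Require Import ssreflect ssrfun ssrbool eqtype ssrnat seq fintype finfun zify.
Open Scope R_scope.

Lemma HB1 M (rho : R -> R) : (forall x, 0 < rho x) ->
  exists l : list R, forall x, Rabs x <= M -> exists y, In y l /\ Rabs (x - y) < rho y.
Proof.
  intros Hr.
  set F := Rtopology.mkfamily (fun _ => True) (fun y x => Rabs (x - y) < rho y) (fun _ _ => I).
  have cov : Rtopology.covering_open_set (fun c => -M <= c <= M) F.
  { split.
    - intros x _. exists x. simpl. rewrite Rminus_diag Rabs_R0. apply Hr.
    - intros y x Hx. simpl in Hx.
      exists (mkposreal (rho y - Rabs (x - y)) ltac:(lra)).
      intros z Hz. unfold Rtopology.disc in Hz. simpl in Hz |- *.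
      have := Rabs_triang (z - x) (x - y). replace (z - x + (x - y)) with (z - y) by ring. lra. }
  destruct (Rtopology.compact_P3 (-M) M F cov) as [D [Dc [l Hl]]].
  exists l. intros x Hx. have Hx' : -M <= x <= M by (move: Hx; unfold Rabs; destruct (Rcase_abs x); lra).
  destruct (Dc x Hx') as [y [Hy1 Hy2]]. exists y. split; auto.
  apply Hl. split; auto. exact I.
Qed.

Definition nearv (m : nat) (r : R) (p q : nat -> R) : Prop :=
  forall i, (i < m)%coq_nat -> Rabs (q i - p i) < r.
Definition inbox (m : nat) (M : R) (q : nat -> R) : Prop :=
  forall i, (i < m)%coq_nat -> Rabs (q i) <= M.
Definition setv (p : nat -> R) (m : nat) (x : R) : nat -> R :=
  fun i => if Nat.eqb i m then x else p i.

Definition minl (l : list R) : R := fold_right Rmin 1 l.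
Lemma minl_pos l : (forall x, In x l -> 0 < x) -> 0 < minl l.
Proof.
  induction l as [|a l IH]; simpl; intros H; [lra|].
  apply Rmin_glb_lt; auto.
Qed.
Lemma minl_le l x : In x l -> minl l <= x.
Proof.
  induction l as [|a l IH]; simpl; [tauto|]. intros [<-|H].
  apply Rmin_l. eapply Rle_trans; [apply Rmin_r| auto].
Qed.

Lemma HBm m : forall M (r : (nat -> R) -> R), (forall p, 0 < r p) ->
  exists l : list (nat -> R), forall q, inbox m M q -> exists p, In p l /\ nearv m (r p) p q.
Proof.
  induction m as [|m IH]; intros M r Hr.
  - exists ((fun _ => 0) :: nil). intros q _. exists (fun _ => 0). split; [left; auto|].
    intros i Hi; lia.
  - have Hx : forall x : R, exists l : list (nat -> R), forall q, inbox m M q ->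
        exists p, In p l /\ nearv m (r (setv p m x) / 2) p q.
    { intros x. apply (IH M (fun p => r (setv p m x) / 2)). intros; have := Hr (setv p m x); lra. }
    set lx := fun x => proj1_sig (constructive_indefinite_description _ (Hx x)).
    have lxP : forall x q, inbox m M q -> exists p, In p (lx x) /\ nearv m (r (setv p m x) / 2) p q.
    { intros x. exact (proj2_sig (constructive_indefinite_description _ (Hx x))). }
    set rho := fun x => minl (map (fun p => r (setv p m x) / 2) (lx x)).
    have rho_pos : forall x, 0 < rho x.
    { intros x. apply minl_pos. intros y Hy. apply in_map_iff in Hy. destruct Hy as [p [<- _]].
      have := Hr (setv p m x); lra. }
    destruct (HB1 M rho rho_pos) as [xs Hxs].
    exists (flat_map (fun x => map (fun p => setv p m x) (lx x)) xs).
    intros q Hq.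
    destruct (Hxs (q m) (Hq m ltac:(lia))) as [y [Hy1 Hy2]].
    have Hq' : inbox m M q by (intros i Hi; apply Hq; lia).
    destruct (lxP y q Hq') as [p [Hp1 Hp2]].
    exists (setv p m y). split.
    + apply in_flat_map. exists y. split; auto. apply (in_map (fun p => setv p m y)); auto.
    + intros i Hi. unfold setv at 1. destruct (Nat.eqb_spec i m) as [->|ne].
      * have : rho y <= r (setv p m y) / 2.
        { apply minl_le. apply in_map_iff. exists p; auto. }
        have := Hr (setv p m y). lra.
      * have := Hp2 i ltac:(lia). have := Hr (setv p m y). lra.
Qed.


Definition Cbox {n : nat} (M : R) (c : Cn n) : Prop :=
  forall k, Rabs (fst (c k)) <= M /\ Rabs (snd (c k)) <= M.

Definition enc {n : nat} (c : Cn n) (i : nat) : R :=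
  match (insub i : option 'I_n) with
  | Some k => fst (c k)
  | None => match (insub (i - n)%N : option 'I_n) with Some k => snd (c k) | None => 0 end
  end.
Definition dec {n : nat} (v : nat -> R) : Cn n := fun k => (v (nat_of_ord k), v (n + k)%nat).

Lemma enc_fst n (c : Cn n) (k : 'I_n) : enc c k = fst (c k).
Proof. by rewrite /enc valK. Qed.
Lemma enc_snd n (c : Cn n) (k : 'I_n) : enc c (n + k)%nat = snd (c k).
Proof.
  rewrite /enc insubF; last by rewrite ltnNge leq_addr.
  by rewrite addKn valK.
Qed.

Lemma enc_box n M (c : Cn n) : Cbox M c -> inbox (2 * n) M (enc c).
Proof.
  move=> Hc i Hi. rewrite /enc.
  case: insubP => [k _ Hk|Hn]; first by apply Hc.
  case: insubP => [k _ Hk|Hn2]; first by apply Hc.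
  exfalso. move: Hn Hn2; rewrite -!leqNgt => h1 h2.
  move/leP: h1 => h1. move/leP: h2 => h2. rewrite /lt in Hi. move/leP: h1. move/leP: h2. move/leP: Hi. lia.
Qed.

Lemma CHB n M (r : Cn n -> R) : (forall p, 0 < r p) ->
  exists l : list (Cn n), forall c, Cbox M c -> exists p, In p l /\ near (r p) p c.
Proof.
  move=> Hr.
  destruct (HBm (2 * n) M (fun v => r (dec v)) (fun v => Hr (dec v))) as [l Hl].
  exists (map dec l). move=> c Hc.
  destruct (Hl (enc c) (enc_box n M c Hc)) as [v [Hv1 Hv2]].
  exists (dec v). split; first by apply in_map.
  move=> k. split.
  - have := Hv2 k. rewrite enc_fst. apply. apply/ltP. by rewrite mul2n -addnn ltn_addr.
  - have := Hv2 (n + k)%nat. rewrite enc_snd. apply. apply/ltP. by rewrite mul2n -addnn ltn_add2l.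
Qed.

Definition suml (l : list R) : R := fold_right (fun x acc => Rabs x + acc) 0 l.
Lemma suml_ge l x : In x l -> Rabs x <= suml l.
Proof.
  elim: l => [|a l IH] //=. move=> [<-|H].
  - have : 0 <= suml l by (elim: l {IH} => [|b l' IH'] /=; [lra| have := Rabs_pos b; lra]). lra.
  - have := IH H. have := Rabs_pos a. lra.
Qed.
Lemma suml_pos l : 0 <= suml l.
Proof. elim: l => [|b l' IH'] /=; [lra| have := Rabs_pos b; lra]. Qed.

Lemma abs_sub_le x y : Rabs (x - y) <= Rabs x + Rabs y.
Proof. have := Rabs_triang x (- y). rewrite Rabs_Ropp. unfold Rminus. lra. Qed.

Lemma near_trans n r1 r2 (p b c : Cn n) : near r1 p b -> near r2 b c -> near (r1 + r2) p c.
Proof.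
  move=> h1 h2 k. have [a1 a2] := h1 k. have [b1 b2] := h2 k. split.
  - have := Rabs_triang (fst (b k) - fst (p k)) (fst (c k) - fst (b k)).
    have -> : fst (b k) - fst (p k) + (fst (c k) - fst (b k)) = fst (c k) - fst (p k) by ring. lra.
  - have := Rabs_triang (snd (b k) - snd (p k)) (snd (c k) - snd (b k)).
    have -> : snd (b k) - snd (p k) + (snd (c k) - snd (b k)) = snd (c k) - snd (p k) by ring. lra.
Qed.

Lemma near_mono n r1 r2 (p c : Cn n) : r1 <= r2 -> near r1 p c -> near r2 p c.
Proof. move=> h h1 k. have [a1 a2] := h1 k. split; lra. Qed.

Lemma near_sym n r (p c : Cn n) : near r p c -> near r c p.
Proof. move=> h k. have [a1 a2] := h k. rewrite Rabs_minus_sym (Rabs_minus_sym (snd _)). by split. Qed.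

Lemma box_bound n M (g : Cn n -> R) :
  (forall p, exists r K, 0 < r /\ forall c, near r p c -> Rabs (g c) <= K) ->
  exists K, 0 <= K /\ forall c, Cbox M c -> Rabs (g c) <= K.
Proof.
  move=> H.
  set r := fun p => proj1_sig (constructive_indefinite_description _ (H p)).
  have rP : forall p, exists K, 0 < r p /\ forall c, near (r p) p c -> Rabs (g c) <= K.
  { move=> p. exact (proj2_sig (constructive_indefinite_description _ (H p))). }
  set K := fun p => proj1_sig (constructive_indefinite_description _ (rP p)).
  have KP : forall p, 0 < r p /\ forall c, near (r p) p c -> Rabs (g c) <= K p.
  { move=> p. exact (proj2_sig (constructive_indefinite_description _ (rP p))). }
  have [l Hl] := CHB n M r (fun p => proj1 (KP p)).
  exists (suml (map K l)). split; first by apply suml_pos.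
  move=> c Hc. have [p [Hp1 Hp2]] := Hl c Hc.
  have := proj2 (KP p) c Hp2.
  have := suml_ge (map K l) (K p) (in_map K l p Hp1).
  have := Rle_abs (K p). lra.
Qed.

Lemma box_unif n M (g : Cn n -> R) : continuous_Cn g ->
  forall eps, 0 < eps -> exists del, 0 < del /\
    forall b c, Cbox M b -> near del b c -> Rabs (g c - g b) < eps.
Proof.
  move=> Hg eps He.
  have H : forall p, exists d, 0 < d /\ forall b, near d p b -> Rabs (g b - g p) < eps / 2.
  { move=> p. apply Hg; lra. }
  set d := fun p => proj1_sig (constructive_indefinite_description _ (H p)).
  have dP : forall p, 0 < d p /\ forall b, near (d p) p b -> Rabs (g b - g p) < eps / 2.
  { move=> p. exact (proj2_sig (constructive_indefinite_description _ (H p))). }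
  have rpos : forall p, 0 < d p / 2 by (move=> p; have := proj1 (dP p); lra).
  have [l Hl] := CHB n M (fun p => d p / 2) rpos.
  exists (minl (map (fun p => d p / 2) l)). split.
  { apply minl_pos. move=> x /in_map_iff [p [<- _]]. apply rpos. }
  move=> b c Hb Hbc. have [p [Hp1 Hp2]] := Hl b Hb.
  have hm : minl (map (fun p => d p / 2) l) <= d p / 2.
  { apply minl_le. apply (in_map (fun p => d p / 2)); auto. }
  have Hc := near_trans _ _ _ _ _ _ Hp2 Hbc.
  have Hc' : near (d p) p c by (apply: near_mono _ Hc; lra).
  have Hb' : near (d p) p b by (apply: near_mono _ Hp2; have := proj1 (dP p); lra).
  have := proj2 (dP p) c Hc'. have := proj2 (dP p) b Hb'.
  have -> : g c - g b = (g c - g p) - (g b - g p) by ring.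
  move=> h1 h2. have := abs_sub_le (g c - g p) (g b - g p). lra.
Qed.

Definition cdle {n : nat} (b c : Cn n) (d : R) : Prop :=
  forall k, Rabs (fst (b k) - fst (c k)) <= d /\ Rabs (snd (b k) - snd (c k)) <= d.

Definition loc_lip_R {n : nat} (g : Cn n -> R) : Prop :=
  forall p, exists r L, 0 < r /\ forall b c, near r p b -> near r p c ->
    forall d, cdle b c d -> Rabs (g b - g c) <= L * d.

Lemma box_lip n M (g : Cn n -> R) : loc_lip_R g ->
  exists L, 0 <= L /\ forall b c, Cbox M b -> Cbox M c -> forall d, 0 <= d -> cdle b c d ->
    Rabs (g b - g c) <= L * d.
Proof.
  move=> H.
  set r := fun p => proj1_sig (constructive_indefinite_description _ (H p)).
  have rP : forall p, exists L, 0 < r p /\ forall b c, near (r p) p b -> near (r p) p c ->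
    forall d, cdle b c d -> Rabs (g b - g c) <= L * d.
  { move=> p. exact (proj2_sig (constructive_indefinite_description _ (H p))). }
  set L := fun p => proj1_sig (constructive_indefinite_description _ (rP p)).
  have LP : forall p, 0 < r p /\ forall b c, near (r p) p b -> near (r p) p c ->
    forall d, cdle b c d -> Rabs (g b - g c) <= L p * d.
  { move=> p. exact (proj2_sig (constructive_indefinite_description _ (rP p))). }
  have [K [K0 HK]] : exists K, 0 <= K /\ forall c, Cbox M c -> Rabs (g c) <= K.
  { apply box_bound. move=> p. exists (r p), (Rabs (g p) + Rabs (L p) * r p).
    have [r0 Lp] := LP p. split; auto. move=> c Hc.
    have hp : near (r p) p p by (move=> k; rewrite !Rminus_diag Rabs_R0; split; auto).
    have := Lp c p Hc hp (r p) ltac:(move=> k; have [a1 a2] := Hc k; split; lra).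
    have := Rabs_triang (g c - g p) (g p). have -> : g c - g p + g p = g c by ring.
    have := Rle_abs (L p). move=> h1 h2 h3.
    have : L p * r p <= Rabs (L p) * r p by (apply Rmult_le_compat_r; lra). lra. }
  have rpos : forall p, 0 < r p / 2 by (move=> p; have := proj1 (LP p); lra).
  have [l Hl] := CHB n M (fun p => r p / 2) rpos.
  set del := minl (map (fun p => r p / 2) l).
  have del0 : 0 < del by (apply minl_pos; move=> x /in_map_iff [p [<- _]]; apply rpos).
  exists (suml (map L l) + 2 * K / del). split.
  { have := suml_pos (map L l). have : 0 <= 2 * K / del by (apply Rmult_le_pos; [lra|left; apply Rinv_0_lt_compat; lra]). lra. }
  move=> b c Hb Hc d d0 Hd.
  have e2 : 0 <= 2 * K / del * d by (apply Rmult_le_pos; [apply Rmult_le_pos; [lra|left; apply Rinv_0_lt_compat; lra]|lra]).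
  have e1 : 0 <= suml (map L l) * d by (apply Rmult_le_pos; [apply suml_pos|lra]).
  rewrite Rmult_plus_distr_r.
  destruct (Rlt_dec d del) as [hd|hd].
  - have [p [Hp1 Hp2]] := Hl b Hb.
    have hm : del <= r p / 2 by (apply minl_le; apply (in_map (fun p => r p / 2)); auto).
    have Hb' : near (r p) p b by (apply: near_mono _ Hp2; lra).
    have Hc' : near (r p) p c.
    { move=> k. have [a1 a2] := Hp2 k. have [b1 b2] := Hd k. split.
      - have := abs_sub_le (fst (b k) - fst (p k)) (fst (b k) - fst (c k)).
        have -> : fst (b k) - fst (p k) - (fst (b k) - fst (c k)) = fst (c k) - fst (p k) by ring. lra.
      - have := abs_sub_le (snd (b k) - snd (p k)) (snd (b k) - snd (c k)).
        have -> : snd (b k) - snd (p k) - (snd (b k) - snd (c k)) = snd (c k) - snd (p k) by ring. lra. }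
    have := proj2 (LP p) b c Hb' Hc' d Hd.
    have : L p * d <= suml (map L l) * d.
    { apply Rmult_le_compat_r; auto. eapply Rle_trans; [apply Rle_abs|]. apply suml_ge. by apply in_map. }
    lra.
  - have := abs_sub_le (g b) (g c). have := HK b Hb. have := HK c Hc.
    have : 2 * K <= 2 * K / del * d.
    { have -> : 2 * K / del * d = 2 * K * (d / del) by (field; lra).
      have : 1 <= d / del.
      { apply (Rmult_le_reg_r del); [lra|]. have -> : d / del * del = d by (field; lra). lra. }
      nra. }
    lra.
Qed.


Lemma upd_upd n (c : Cn n) j v w : upd (upd c j v) j w = upd c j w.
Proof. apply functional_extensionality => k. rewrite /upd. by case: (k == j). Qed.
Lemma upd_at n (c : Cn n) j v : upd c j v j = v.
Proof. by rewrite /upd eqxx. Qed.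
Lemma upd_same n (c : Cn n) j : upd c j (c j) = c.
Proof. apply functional_extensionality => k. rewrite /upd. case: eqP => [->|] //. Qed.

Section MVT.
Variable n : nat.
Variable h : Cn n -> R.
Variables hx hy : 'I_n -> Cn n -> R.
Hypothesis hp : partials h hx hy.

Lemma mvt_x c j y u v : exists s, Rmin u v <= s <= Rmax u v /\
  Rabs (h (upd c j (v, y)) - h (upd c j (u, y))) = Rabs (hx j (upd c j (s, y))) * Rabs (v - u).
Proof.
  have := MVT_abs (fun s => h (upd c j (s, y))) (fun s => hx j (upd c j (s, y))) u v.
  case.
  - move=> s _. have := proj1 (hp (upd c j (s, y)) j). rewrite /pd_x upd_at /=.
    by have -> : (fun s0 => h (upd (upd c j (s, y)) j (s0, y))) = (fun s0 => h (upd c j (s0, y))) by apply functional_extensionality => ?; rewrite upd_upd.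
  - move=> s0 [h1 h2]. by exists s0.
Qed.

Lemma mvt_y c j x u v : exists s, Rmin u v <= s <= Rmax u v /\
  Rabs (h (upd c j (x, v)) - h (upd c j (x, u))) = Rabs (hy j (upd c j (x, s))) * Rabs (v - u).
Proof.
  have := MVT_abs (fun s => h (upd c j (x, s))) (fun s => hy j (upd c j (x, s))) u v.
  case.
  - move=> s _. have := proj2 (hp (upd c j (x, s)) j). rewrite /pd_y upd_at /=.
    by have -> : (fun s0 => h (upd (upd c j (x, s)) j (x, s0))) = (fun s0 => h (upd c j (x, s0))) by apply functional_extensionality => ?; rewrite upd_upd.
  - move=> s0 [h1 h2]. by exists s0.
Qed.

Definition mix (k : nat) (b c : Cn n) : Cn n := fun i => if (i < k)%N then b i else c i.

Lemma between_abs s u v M : Rmin u v <= s <= Rmax u v -> Rabs u <= M -> Rabs v <= M -> Rabs s <= M.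
Proof.
  move=> [h1 h2] hu hv. move: hu hv; rewrite /Rabs.
  move: h1 h2; rewrite /Rmin /Rmax.
  repeat case: Rle_dec; repeat case: Rcase_abs; intros; lra.
Qed.

Lemma box_lip_h M K : 0 <= K ->
  (forall j c, Cbox M c -> Rabs (hx j c) <= K /\ Rabs (hy j c) <= K) ->
  forall b c, Cbox M b -> Cbox M c -> forall d, 0 <= d -> cdle b c d ->
    Rabs (h b - h c) <= 2 * INR n * K * d.
Proof.
  move=> K0 HK b c Hb Hc d d0 Hd.
  have mix_box : forall k, Cbox M (mix k b c).
  { move=> k i. rewrite /mix. by case: (i < k)%N. }
  suff : forall k, (k <= n)%N -> Rabs (h (mix k b c) - h c) <= 2 * INR k * K * d.
  { move=> /(_ n (leqnn n)). have -> : mix n b c = b; last by [].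
    apply functional_extensionality => i. by rewrite /mix ltn_ord. }
  elim=> [|k IH] hk.
  - have -> : mix 0 b c = c by apply functional_extensionality => i; rewrite /mix.
    rewrite Rminus_diag Rabs_R0 /=. nra.
  - have hk' : (k < n)%N by [].
    set kk := Ordinal hk'.
    have e1 : mix k.+1 b c = upd (mix k b c) kk (fst (b kk), snd (b kk)).
    { apply functional_extensionality => i. rewrite /mix /upd.
      case: eqP => [->|ne] /=; first by rewrite ltnSn; case: (b kk).
      rewrite ltnS leq_eqVlt. have -> : (nat_of_ord i == k) = false.
      { apply/eqP => e. apply ne. by apply val_inj. }
      by []. }
    have e0 : mix k b c = upd (mix k b c) kk (fst (c kk), snd (c kk)).
    { rewrite -surjective_pairing. have -> : c kk = mix k b c kk by rewrite /mix ltnn.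
      by rewrite upd_same. }
    have [s1 [Hs1 E1]] := mvt_y (mix k b c) kk (fst (b kk)) (snd (c kk)) (snd (b kk)).
    have [s2 [Hs2 E2]] := mvt_x (mix k b c) kk (snd (c kk)) (fst (c kk)) (fst (b kk)).
    have bx1 : Cbox M (upd (mix k b c) kk (fst (b kk), s1)).
    { move=> i. rewrite /upd. case: ifP => _; last by apply mix_box.
      simpl. split; first by apply Hb. apply: (between_abs _ _ _ _ Hs1); [apply Hc|apply Hb]. }
    have bx2 : Cbox M (upd (mix k b c) kk (s2, snd (c kk))).
    { move=> i. rewrite /upd. case: ifP => _; last by apply mix_box.
      simpl. split; last by apply Hc. apply: (between_abs _ _ _ _ Hs2); [apply Hc|apply Hb]. }
    have d1 := proj2 (HK kk _ bx1). have d2 := proj1 (HK kk _ bx2).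
    have [dd1 dd2] := Hd kk.
    have ih := IH (ltnW hk).
    rewrite e1.
    set P := h (upd (mix k b c) kk (fst (b kk), snd (b kk))).
    set Q := h (upd (mix k b c) kk (fst (b kk), snd (c kk))).
    set Rr := h (upd (mix k b c) kk (fst (c kk), snd (c kk))).
    have eR : Rr = h (mix k b c) by rewrite /Rr -e0.
    move: E1 E2 ih. rewrite -/P -/Q -/Rr eR => E1 E2 ih.
    have t1 : Rabs (P - Q) <= K * d.
    { rewrite E1. apply Rmult_le_compat; [apply Rabs_pos|apply Rabs_pos|exact d1|exact dd2]. }
    have t2 : Rabs (Q - h (mix k b c)) <= K * d.
    { rewrite E2. apply Rmult_le_compat; [apply Rabs_pos|apply Rabs_pos|exact d2|exact dd1]. }
    have := Rabs_triang (P - Q) (Q - h (mix k b c) + (h (mix k b c) - h c)).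
    have := Rabs_triang (Q - h (mix k b c)) (h (mix k b c) - h c).
    have -> : P - Q + (Q - h (mix k b c) + (h (mix k b c) - h c)) = P - h c by ring.
    rewrite S_INR. lra.
Qed.

End MVT.


Definition closeZ (d u : R) : Prop := exists m : Z, Rabs (u - 2 * PI * IZR m) < d.

Lemma closeZ_add d1 d2 x y : closeZ d1 x -> closeZ d2 y -> closeZ (d1 + d2) (x + y).
Proof.
  move=> [m1 h1] [m2 h2]. exists (m1 + m2)%Z. rewrite plus_IZR.
  have := Rabs_triang (x - 2 * PI * IZR m1) (y - 2 * PI * IZR m2).
  have -> : x - 2 * PI * IZR m1 + (y - 2 * PI * IZR m2) = x + y - 2 * PI * (IZR m1 + IZR m2) by ring.
  lra.
Qed.
Lemma closeZ_opp d x : closeZ d x -> closeZ d (- x).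
Proof.
  move=> [m h]. exists (- m)%Z. rewrite opp_IZR.
  have -> : - x - 2 * PI * - IZR m = - (x - 2 * PI * IZR m) by ring. by rewrite Rabs_Ropp.
Qed.
Lemma closeZ_mono d1 d2 x : d1 <= d2 -> closeZ d1 x -> closeZ d2 x.
Proof. move=> h [m hm]. exists m. lra. Qed.
Lemma closeZ_0 d : 0 < d -> closeZ d 0.
Proof. move=> h. exists 0%Z. rewrite Rmult_0_r Rminus_0_r Rabs_R0. lra. Qed.

Definition frac (y : R) : R := y - IZR (Int_part y).
Lemma frac_bnd y : 0 <= frac y < 1.
Proof. have [h1 h2] := base_Int_part y. rewrite /frac. lra. Qed.

Section Box.
Variable Q : nat.
Let Q' := INR Q.+1.
Lemma Q'pos : 0 < Q'. Proof. rewrite /Q'. apply lt_0_INR. lia. Qed.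

Definition bidx (u : R) : 'I_Q.+1 := inord (Z.to_nat (Int_part (Q' * frac (u / (2 * PI))))).

Lemma bidx_val u : IZR (Int_part (Q' * frac (u / (2 * PI)))) = INR (bidx u).
Proof.
  have [f0 f1] := frac_bnd (u / (2 * PI)).
  have Q0 := Q'pos.
  set y := Q' * frac (u / (2 * PI)).
  have y0 : 0 <= y < Q' by (split; rewrite /y; nra).
  have [h1 h2] := base_Int_part y.
  have i0' : (-1 < Int_part y)%Z by (apply lt_IZR; simpl; lra).
  have i0 : (0 <= Int_part y)%Z by lia.
  have i1 : (Int_part y < Z.of_nat Q.+1)%Z.
  { apply lt_IZR. rewrite -INR_IZR_INZ. rewrite /Q' in y0. lra. }
  rewrite /bidx -/y inordK.
  - by rewrite INR_IZR_INZ Z2Nat.id.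
  - apply/ltP. lia.
Qed.

Lemma same_box u1 u2 : bidx u1 = bidx u2 -> closeZ (2 * PI / Q') (u1 - u2).
Proof.
  move=> E.
  have e := bidx_val u1. rewrite E -(bidx_val u2) in e.
  have Q0 := Q'pos. have P0 := PI_RGT_0.
  set y1 := Q' * frac (u1 / (2 * PI)) in e. set y2 := Q' * frac (u2 / (2 * PI)) in e.
  have [a1 a2] := base_Int_part y1. have [b1 b2] := base_Int_part y2.
  have hy : Rabs (y1 - y2) < 1 by (apply Rabs_def1; lra).
  exists (Int_part (u1 / (2 * PI)) - Int_part (u2 / (2 * PI)))%Z.
  rewrite minus_IZR.
  have -> : u1 - u2 - 2 * PI * (IZR (Int_part (u1 / (2 * PI))) - IZR (Int_part (u2 / (2 * PI))))
    = 2 * PI / Q' * (y1 - y2).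
  { rewrite /y1 /y2 /frac. field. split; lra. }
  rewrite Rabs_mult Rabs_right; last by (apply Rle_ge; apply Rlt_le; apply Rdiv_lt_0_compat; lra).
  have : 0 < 2 * PI / Q' by (apply Rdiv_lt_0_compat; lra). nra.
Qed.
End Box.

Lemma nat_big_R x : exists N : nat, x <= INR N.
Proof.
  destruct (archimed x) as [h1 h2].
  destruct (Z_le_gt_dec 0 (up x)) as [hp|hn].
  - exists (Z.to_nat (up x)). rewrite INR_IZR_INZ Z2Nat.id; auto. lra.
  - exists 0%nat. simpl. have : IZR (up x) < 0 by (apply IZR_lt; lia). lra.
Qed.

Section Kron.
Variable n : nat.
Variable Lam : 'I_n -> R.
Variable Q : nat.
Let Q' := INR Q.+1.
Let e := 2 * PI / Q'.

Definition vbox (t : R) : {ffun 'I_n -> 'I_Q.+1} := [ffun j => bidx Q (Lam j * t)].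

Lemma vbox_close t1 t2 : vbox t1 = vbox t2 -> forall j, closeZ e (Lam j * t1 - Lam j * t2).
Proof.
  move=> E j. apply same_box. have := congr1 (fun f : {ffun 'I_n -> 'I_Q.+1} => f j) E. by rewrite /= !ffunE.
Qed.

Lemma e_pos : 0 < e.
Proof. rewrite /e. apply Rdiv_lt_0_compat; [have := PI_RGT_0; lra| apply (Q'pos Q)]. Qed.

Lemma pigeon A : exists q : nat, (1 <= q)%N /\ forall j, closeZ e (Lam j * (INR q * A)).
Proof.
  set N := #|{ffun 'I_n -> 'I_Q.+1}|.
  set f := fun i : 'I_N.+1 => vbox (INR i * A).
  have ninj : ~ injective f.
  { move=> inj. have := leq_card f inj. by rewrite card_ord ltnn. }
  have [i [k [E ne]]] : exists i k, f i = f k /\ i <> k.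
  { apply NNPP => H. apply ninj => x y Exy. apply NNPP => nxy. apply H. by exists x, y. }
  have ne' : nat_of_ord i <> nat_of_ord k by (move=> h; apply ne; apply val_inj).
  have [lt|lt] : (i < k)%coq_nat \/ (k < i)%coq_nat by lia.
  - exists (k - i)%N. split; first by apply/leP; lia.
    move=> j. have := vbox_close _ _ (esym E) j.
    rewrite minus_INR; last by lia.
    have -> : Lam j * ((INR k - INR i) * A) = Lam j * (INR k * A) - Lam j * (INR i * A) by ring.
    done.
  - exists (i - k)%N. split; first by apply/leP; lia.
    move=> j. have := vbox_close _ _ E j.
    rewrite minus_INR; last by lia.
    have -> : Lam j * ((INR i - INR k) * A) = Lam j * (INR i * A) - Lam j * (INR k * A) by ring.
    done.
Qed.

Lemma reach a : exists t, 0 <= t /\ forall j, closeZ e (Lam j * t - Lam j * a).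
Proof.
  have ep := e_pos.
  destruct (Rle_dec 0 a) as [ha|ha].
  - exists a. split; first lra. move=> j. rewrite Rminus_diag. by apply closeZ_0.
  - have [q [hq Hq]] := pigeon (- a).
    exists ((INR q - 1) * - a). split.
    + have : 1 <= INR q by (apply (le_INR 1); apply/leP). nra.
    + move=> j. have -> : Lam j * ((INR q - 1) * - a) - Lam j * a = Lam j * (INR q * - a) by ring.
      apply Hq.
Qed.

Definition fsum (T : finType) (f : T -> R) : R := foldr (fun x acc => f x + acc) 0 (enum T).
Lemma fsum_ge (T : finType) (f : T -> R) x : (forall y, 0 <= f y) -> f x <= fsum T f.
Proof.
  move=> pos. rewrite /fsum. have : x \in enum T by rewrite mem_enum.
  elim: (enum T) => [|y l IH] //=. rewrite in_cons. case/orP => [/eqP ->|H].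
  - have : 0 <= foldr (fun x0 acc => f x0 + acc) 0 l by (elim: l {IH} => [|z l' IH'] /=; [lra| have := pos z; lra]).
    lra.
  - have := IH H. have := pos y. lra.
Qed.

Lemma kron_Q : exists L, 0 < L /\ forall s, exists tau, s <= tau <= s + L /\
  forall j, closeZ (2 * e) (Lam j * tau).
Proof.
  have ep := e_pos.
  have H : forall b : {ffun 'I_n -> 'I_Q.+1}, exists t, 0 <= t /\
     forall a, vbox a = b -> forall j, closeZ (2 * e) (Lam j * t - Lam j * a).
  { move=> b. destruct (classic (exists a0, vbox a0 = b)) as [[a0 Ha0]|na].
    - have [t [t0 Ht]] := reach a0. exists t. split; auto. move=> a Ha j.
      have -> : Lam j * t - Lam j * a = (Lam j * t - Lam j * a0) + (Lam j * a0 - Lam j * a) by ring.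
      have -> : 2 * e = e + e by ring.
      apply closeZ_add; first by apply Ht.
      apply vbox_close. by rewrite Ha0 Ha.
    - exists 0. split; first lra. move=> a Ha. exfalso. apply na. by exists a. }
  set Tf := fun b => proj1_sig (constructive_indefinite_description _ (H b)).
  have TfP : forall b, 0 <= Tf b /\ forall a, vbox a = b -> forall j, closeZ (2 * e) (Lam j * Tf b - Lam j * a).
  { move=> b. exact (proj2_sig (constructive_indefinite_description _ (H b))). }
  set K := fsum _ Tf.
  have K0 : 0 <= K.
  { have := fsum_ge _ Tf (vbox 0) (fun y => proj1 (TfP y)). have := proj1 (TfP (vbox 0)). rewrite /K. lra. }
  exists (K + 1). split; first lra.
  move=> s. set a := s + K. set t := Tf (vbox a).
  have t0 : 0 <= t := proj1 (TfP _).
  have tK : t <= K := fsum_ge _ Tf (vbox a) (fun y => proj1 (TfP y)).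
  exists (a - t). split; first by rewrite /a; lra.
  move=> j. have := closeZ_opp _ _ (proj2 (TfP (vbox a)) a erefl j).
  rewrite -/t. by have -> : - (Lam j * t - Lam j * a) = Lam j * (a - t) by ring.
Qed.
End Kron.

Lemma kron n (Lam : 'I_n -> R) d : 0 < d -> exists L, 0 < L /\ forall s, exists tau,
  s <= tau <= s + L /\ forall j, closeZ d (Lam j * tau).
Proof.
  move=> hd. have P0 := PI_RGT_0.
  have [Q HQ] : exists Q : nat, 4 * PI / d <= INR Q by apply nat_big_R.
  have Q1 : 0 < INR Q.+1 by (apply lt_0_INR; lia).
  have [L [L0 HL]] := kron_Q n Lam Q.
  exists L; split; auto. move=> s. have [tau [h1 h2]] := HL s. exists tau; split; auto.
  move=> j. apply: closeZ_mono (h2 j).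
  rewrite S_INR. have := pos_INR Q. move=> pQ. apply (Rmult_le_reg_r (INR Q + 1)); [lra|].
  have -> : 2 * (2 * PI / (INR Q + 1)) * (INR Q + 1) = 4 * PI by (field; lra).
  have : 4 * PI <= d * INR Q.
  { have := Rmult_le_compat_l d _ _ (Rlt_le _ _ hd) HQ.
    have -> : d * (4 * PI / d) = 4 * PI by (field; lra). done. }
  nra.
Qed.


Lemma cos_Z x m : cos (x + 2 * PI * IZR m) = cos x /\ sin (x + 2 * PI * IZR m) = sin x.
Proof.
  destruct (Z_le_gt_dec 0 m) as [hm|hm].
  - have e : IZR m = INR (Z.to_nat m) by rewrite INR_IZR_INZ Z2Nat.id.
    rewrite e. have -> : x + 2 * PI * INR (Z.to_nat m) = x + 2 * INR (Z.to_nat m) * PI by ring.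
    by rewrite cos_period sin_period.
  - have e : IZR m = - INR (Z.to_nat (- m)) by rewrite INR_IZR_INZ Z2Nat.id; [rewrite opp_IZR; ring|lia].
    rewrite e. set y := x + 2 * PI * - INR (Z.to_nat (- m)).
    have -> : x = y + 2 * INR (Z.to_nat (- m)) * PI by rewrite /y; ring.
    by rewrite cos_period sin_period.
Qed.

Lemma cos_lip x y : Rabs (cos x - cos y) <= Rabs (x - y).
Proof.
  have [c [E _]] := MVT_abs cos (fun c => - sin c) y x (fun c _ => derivable_pt_lim_cos c).
  rewrite E. have := SIN_bound c. rewrite Rabs_Ropp.
  have := Rabs_pos (x - y). move=> h0 [h1 h2].
  have : Rabs (sin c) <= 1 by (unfold Rabs; destruct Rcase_abs; lra). nra.
Qed.

Lemma sin_lip x y : Rabs (sin x - sin y) <= Rabs (x - y).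
Proof.
  have [c [E _]] := MVT_abs sin cos y x (fun c _ => derivable_pt_lim_sin c).
  rewrite E. have := COS_bound c.
  have := Rabs_pos (x - y). move=> h0 [h1 h2].
  have : Rabs (cos c) <= 1 by (unfold Rabs; destruct Rcase_abs; lra). nra.
Qed.

Definition closeZ' (d u : R) : Prop := exists m : Z, Rabs (u - 2 * PI * IZR m) < d.

Lemma trig_close d u v : closeZ' d (u - v) -> Rabs (cos u - cos v) < d /\ Rabs (sin u - sin v) < d.
Proof.
  move=> [m hm]. set e := u - v - 2 * PI * IZR m.
  have -> : u = (v + e) + 2 * PI * IZR m by rewrite /e; ring.
  have [-> ->] := cos_Z (v + e) m.
  have := cos_lip (v + e) v. have := sin_lip (v + e) v.
  have -> : v + e - v = e by ring. rewrite /e in hm |- *. lra.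
Qed.

From Coquelicot Require Import Coquelicot.
Open Scope R_scope.


Section MeanThm.
Variable g : R -> R.
Hypothesis gc : forall t, continuous g t.
Variable B : R.
Hypothesis gB : forall t, Rabs (g t) <= B.

Lemma cont_shift tau z : continuous (fun t => t + tau) z.
Proof. apply continuity_pt_filterlim. apply continuity_pt_plus; [apply continuity_pt_id|apply continuity_pt_const; intros ??; auto]. Qed.

Lemma mt_ex a b : ex_RInt g a b.
Proof. apply (@ex_RInt_continuous R_CompleteNormedModule); intros; apply gc. Qed.

Lemma mt_shift tau T : RInt g tau (tau + T) = RInt (fun t => g (t + tau)) 0 T.
Proof.
  have := RInt_comp_lin g 1 tau 0 T.
  replace (1 * 0 + tau) with tau by ring. replace (1*T+tau) with (tau+T) by ring.
  intro H; rewrite -H; last by apply mt_ex.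
  apply RInt_ext => x _.
  change (1 * g (1 * x + tau) = g (x + tau)). rewrite Rmult_1_l. f_equal; ring.
Qed.

Lemma mt_bnd a b : a <= b -> Rabs (RInt g a b) <= (b - a) * B.
Proof. intros; apply abs_RInt_le_const; auto; apply mt_ex. Qed.

Lemma mt_chasles a b c : @eq R (RInt g a b + RInt g b c) (RInt g a c).
Proof. apply (RInt_Chasles g a b c); apply mt_ex. Qed.

Lemma mt_window eps L s T tau : 0 <= T -> s <= tau <= s + L ->
  (forall t, Rabs (g (t + tau) - g t) <= eps) ->
  Rabs (RInt g s (s + T) - RInt g 0 T) <= eps * T + 2 * L * B.
Proof.
  intros HT Htau Hg.
  have e1 : RInt g s (s+T) = RInt g s tau + RInt g tau (tau + T) - RInt g (s+T) (tau+T).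
  { have := mt_chasles s tau (tau+T). have := mt_chasles s (s+T) (tau+T). lra. }
  have e2 : Rabs (RInt g tau (tau+T) - RInt g 0 T) <= T * eps.
  { rewrite mt_shift.
    have ex1 : ex_RInt (fun t => g (t + tau)) 0 T.
    { apply (@ex_RInt_continuous R_CompleteNormedModule); intros. apply: continuous_comp. apply cont_shift. apply gc. }
    have := RInt_minus (fun t => g (t+tau)) g 0 T ex1 (mt_ex 0 T).
    change (minus (RInt (fun t => g (t + tau)) 0 T) (RInt g 0 T)) with
      (RInt (fun t => g (t + tau)) 0 T - RInt g 0 T).
    intro E; rewrite <- E.
    replace T with (T - 0) at 2 by ring.
    apply abs_RInt_le_const; [lra| apply: ex_RInt_minus; [exact ex1| apply mt_ex] | intros; apply Hg]. }
  have e3 := mt_bnd s tau ltac:(lra).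
  have e4 := mt_bnd (s+T) (tau+T) ltac:(lra).
  have B0 : 0 <= B by (specialize (gB 0); have := Rabs_pos (g 0); lra).
  rewrite e1.
  replace (RInt g s tau + RInt g tau (tau + T) - RInt g (s + T) (tau + T) - RInt g 0 T)
    with (RInt g s tau + (RInt g tau (tau + T) - RInt g 0 T) - RInt g (s + T) (tau + T)) by ring.
  eapply Rle_trans; [apply Rabs_triang|].
  eapply Rle_trans; [apply Rplus_le_compat_l; rewrite Rabs_Ropp; apply Rle_refl|].
  eapply Rle_trans; [apply Rplus_le_compat_r; apply Rabs_triang|].
  have : (tau - s) * B <= L * B by apply Rmult_le_compat_r; lra.
  have : (tau + T - (s + T)) * B <= L * B by apply Rmult_le_compat_r; lra.
  nra.
Qed.

Lemma mt_blocks eps L T : 0 < T ->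
  (forall s, exists tau, s <= tau <= s + L /\ forall t, Rabs (g (t + tau) - g t) <= eps) ->
  forall k : nat, Rabs (RInt g 0 (INR k * T) - INR k * RInt g 0 T) <= INR k * (eps * T + 2 * L * B).
Proof.
  intros HT AP k; induction k.
  - simpl. rewrite Rmult_0_l RInt_point. change (zero : R) with 0.
    rewrite Rmult_0_l Rminus_0_r Rabs_R0; lra.
  - rewrite S_INR.
    destruct (AP (INR k * T)) as [tau [Ht Hg]].
    have W := mt_window eps L (INR k * T) T tau ltac:(lra) Ht Hg.
    rewrite <- (mt_chasles 0 (INR k * T) ((INR k + 1) * T)).
    replace ((INR k + 1) * T) with (INR k * T + T) by ring.
    replace (RInt g 0 (INR k * T) + RInt g (INR k * T) (INR k * T + T) - (INR k + 1) * RInt g 0 T)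
      with ((RInt g 0 (INR k * T) - INR k * RInt g 0 T) + (RInt g (INR k * T) (INR k * T + T) - RInt g 0 T)) by ring.
    eapply Rle_trans; [apply Rabs_triang|]. lra.
Qed.

Lemma abs_div_le x y K : 0 < y -> Rabs x <= K * y -> Rabs (x / y) <= K.
Proof.
  intros Hy H. unfold Rdiv. rewrite Rabs_mult Rabs_inv (Rabs_right y); [|lra].
  apply (Rmult_le_reg_r y); auto. rewrite Rmult_assoc Rinv_l; lra.
Qed.

Definition avg s T := RInt g s (s + T) / T.

Lemma mt_cmp eps L T S : 0 < eps -> 0 < L -> 0 < T -> T <= S ->
  (forall s, exists tau, s <= tau <= s + L /\ forall t, Rabs (g (t + tau) - g t) <= eps) ->
  Rabs (avg 0 S - avg 0 T) <= eps + 2 * L * B / T + 2 * B * T / S.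
Proof.
  intros He HL HT HS AP.
  have B0 : 0 <= B by (specialize (gB 0); have := Rabs_pos (g 0); lra).
  set k := Z.to_nat (Int_part (S / T)).
  have Hk : INR k * T <= S /\ S < INR k * T + T /\ 1 <= INR k.
  { have [h1 h2] := base_Int_part (S / T).
    have h0 : (0 <= Int_part (S/T))%Z.
    { apply le_IZR. have : 1 <= S / T. { apply (Rmult_le_reg_r T); auto. unfold Rdiv; rewrite Rmult_assoc Rinv_l; lra. } lra. }
    have ek : INR k = IZR (Int_part (S/T)) by (unfold k; rewrite INR_IZR_INZ Z2Nat.id; auto).
    rewrite ek. have := Rmult_le_compat_r T _ _ (Rlt_le _ _ HT) h1.
    have eST : S / T * T = S by (field; lra).
    rewrite eST. intro; split; auto. split.
    - have h3 : S / T < IZR (Int_part (S/T)) + 1 by lra.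
      have := Rmult_lt_compat_r T _ _ HT h3. rewrite eST. lra.
    - have hST : 1 <= S / T. { apply (Rmult_le_reg_r T); auto. rewrite eST; lra. }
      have hI : (0 < Int_part (S/T))%Z.
      { apply lt_IZR. simpl. lra. }
      change 1 with (IZR 1). apply IZR_le; lia. }
  destruct Hk as [Hk1 [Hk2 Hk3]].
  have Bl := mt_blocks eps L T HT AP k.
  have kT : 0 < INR k * T by nra.
  have R1 : Rabs (RInt g 0 S - RInt g 0 (INR k * T)) <= B * T.
  { have := mt_chasles 0 (INR k * T) S.
    have := mt_bnd (INR k * T) S ltac:(lra).
    set u := RInt g 0 S. set v := RInt g 0 (INR k * T). set w := RInt g (INR k * T) S.
    move=> h1 h2. have -> : u - v = w by lra.
    eapply Rle_trans; [apply h1|]. nra. }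
  have R2 : Rabs (RInt g 0 (INR k * T)) <= INR k * T * B.
  { eapply Rle_trans; [apply mt_bnd; lra|]. lra. }
  unfold avg; rewrite !Rplus_0_l.
  move: R1 R2 Bl.
  set a := RInt g 0 S. set b := RInt g 0 (INR k * T). set c := RInt g 0 T.
  move=> R1 R2 Bl.
  have E : a / S - c / T = (a - b) / S + b * (INR k * T - S) / (S * (INR k * T)) + (b - INR k * c) / (INR k * T).
  { field. lra. }
  rewrite E.
  have S0 : 0 < S by lra.
  have t1 : Rabs ((a - b) / S) <= B * T / S.
  { apply abs_div_le; auto. replace (B * T / S * S) with (B * T) by (field; lra). auto. }
  have t2 : Rabs (b * (INR k * T - S) / (S * (INR k * T))) <= B * T / S.
  { apply abs_div_le; [nra|]. rewrite Rabs_mult (Rabs_left1 (_ - _)); [|lra].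
    replace (B * T / S * (S * (INR k * T))) with (INR k * T * B * T) by (field; lra).
    apply Rmult_le_compat; try lra. apply Rabs_pos. }
  have t3 : Rabs ((b - INR k * c) / (INR k * T)) <= eps + 2 * L * B / T.
  { apply abs_div_le; auto.
    replace ((eps + 2 * L * B / T) * (INR k * T)) with (INR k * (eps * T + 2 * L * B)) by (field; lra).
    auto. }
  have := Rabs_triang ((a - b) / S + b * (INR k * T - S) / (S * (INR k * T))) ((b - INR k * c) / (INR k * T)).
  have := Rabs_triang ((a - b) / S) (b * (INR k * T - S) / (S * (INR k * T))).
  have -> : 2 * B * T / S = B * T / S + B * T / S by field; lra.
  lra.
Qed.

End MeanThm.

Lemma nat_big x : exists N : nat, x <= INR N.
Proof.
  destruct (archimed x) as [h1 h2].
  destruct (Z_le_gt_dec 0 (up x)) as [hp|hn].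
  - exists (Z.to_nat (up x)). rewrite INR_IZR_INZ Z2Nat.id; auto. lra.
  - exists 0%nat. simpl. have : IZR (up x) < 0 by (apply IZR_lt; lia). lra.
Qed.

Section MeanThm2.
Variable g : R -> R.
Hypothesis gc : forall t, continuous g t.
Variable B : R.
Hypothesis gB : forall t, Rabs (g t) <= B.
Hypothesis AP : forall eps, 0 < eps -> exists L, 0 < L /\
  forall s, exists tau, s <= tau <= s + L /\ forall t, Rabs (g (t + tau) - g t) <= eps.

Lemma B0 : 0 <= B.
Proof. specialize (gB 0); have := Rabs_pos (g 0); lra. Qed.

Lemma mt_cauchy e : 0 < e -> exists N, 0 < N /\ forall S S', N <= S -> N <= S' ->
  Rabs (avg g 0 S - avg g 0 S') <= e.
Proof.
  intros He. have B0 := B0.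
  destruct (AP (e/6)) as [L [HL APL]]; [lra|].
  have [T [HT HT2]] : exists T, 1 <= T /\ 2 * L * B / T <= e / 6.
  { have hh : 0 <= 2 * L * B / (e / 6) by (unfold Rdiv; apply Rmult_le_pos; [nra| left; apply Rinv_0_lt_compat; lra]).
    exists (1 + 2 * L * B / (e / 6)). split; [lra|].
    apply (Rmult_le_reg_r (1 + 2 * L * B / (e / 6))); [lra|].
    replace (2 * L * B / (1 + 2 * L * B / (e / 6)) * (1 + 2 * L * B / (e / 6))) with (2 * L * B) by (field; repeat split; nra).
    replace (e / 6 * (1 + 2 * L * B / (e / 6))) with (e/6 + 2 * L * B) by (field; repeat split; nra). lra. }
  have [N [HN HN2]] : exists N, T <= N /\ 2 * B * T <= e / 6 * (N - T).
  { have hh : 0 <= 2 * B * T / (e / 6) by (unfold Rdiv; apply Rmult_le_pos; [nra| left; apply Rinv_0_lt_compat; lra]).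
    exists (T + 2 * B * T / (e / 6)). split; [lra|]. apply Req_le; field; lra. }
  have key : forall S, N <= S -> Rabs (avg g 0 S - avg g 0 T) <= e / 2.
  { intros S HS. eapply Rle_trans.
    apply (mt_cmp g gc B gB (e/6) L T S); try lra. intros s; apply APL.
    have : 2 * B * T / S <= e / 6.
    { apply (Rmult_le_reg_r S); [lra|]. replace (2 * B * T / S * S) with (2 * B * T) by (field; repeat split; nra).
      nra. }
    lra. }
  exists N; split; [lra|]. intros S S' H1 H2.
  have := key S H1. have := key S' H2.
  move=> k1 k2.
  replace (avg g 0 S - avg g 0 S') with ((avg g 0 S - avg g 0 T) - (avg g 0 S' - avg g 0 T)) by ring.
  eapply Rle_trans; [apply Rabs_triang|]. rewrite Rabs_Ropp. lra.
Qed.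

Lemma mt_lim : exists M, forall e, 0 < e -> exists N, 0 < N /\ forall S, N <= S ->
  Rabs (avg g 0 S - M) <= e.
Proof.
  set u := fun m : nat => avg g 0 (INR m).
  have cu : ex_lim_seq_cauchy u.
  { intros [e He]. simpl. destruct (mt_cauchy (e/2)) as [N [HN HC]]; [lra|].
    destruct (nat_big N) as [K HK]. exists K. intros p q hp hq.
    apply le_INR in hp; apply le_INR in hq.
    have := HC (INR p) (INR q) ltac:(lra) ltac:(lra). unfold u. lra. }
  apply ex_lim_seq_cauchy_corr in cu.
  have Hl := Lim_seq_correct' u cu.
  set M := real (Lim_seq u) in Hl.
  exists M. intros e He.
  apply is_lim_seq_Reals in Hl.
  destruct (mt_cauchy (e/2)) as [N [HN HC]]; [lra|].
  exists N; split; auto. intros S HS.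
  destruct (Hl (e/2)) as [K1 HK1]; [lra|].
  destruct (nat_big N) as [K2 HK2].
  have h1 := HK1 (max K1 K2) (Nat.le_max_l _ _).
  have h2 : INR K2 <= INR (max K1 K2) by (apply le_INR; apply Nat.le_max_r).
  have h3 := HC S (INR (max K1 K2)) HS ltac:(lra).
  unfold R_dist, u in h1.
  replace (avg g 0 S - M) with ((avg g 0 S - avg g 0 (INR (max K1 K2))) + (avg g 0 (INR (max K1 K2)) - M)) by ring.
  eapply Rle_trans; [apply Rabs_triang|]. lra.
Qed.

Lemma mt_window_avg e : 0 < e -> exists N, 0 < N /\ forall S s, N <= S ->
  Rabs (avg g s S - avg g 0 S) <= e.
Proof.
  intros He. have B0 := B0.
  destruct (AP (e/2)) as [L [HL APL]]; [lra|].
  exists (1 + 4 * L * B / e). have hh : 0 <= 4 * L * B / e by (unfold Rdiv; apply Rmult_le_pos; [nra| left; apply Rinv_0_lt_compat; lra]).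
  split; [lra|]. intros S s HS.
  destruct (APL s) as [tau [Ht Hg]].
  have W := mt_window g gc B gB (e/2) L s S tau ltac:(lra) Ht Hg.
  unfold avg. rewrite Rplus_0_l.
  have -> : RInt g s (s + S) / S - RInt g 0 S / S = (RInt g s (s + S) - RInt g 0 S) / S by (field; lra).
  apply abs_div_le; [lra|]. eapply Rle_trans; [apply W|].
  have : 4 * L * B <= e * (S - 1) by (apply (Rmult_le_reg_r (/e)); [apply Rinv_0_lt_compat; lra|];
     replace (4 * L * B * / e) with (4 * L * B / e) by auto; replace (e * (S - 1) * / e) with (S - 1) by (field; lra); lra).
  nra.
Qed.

Theorem mean_exists : exists M, time_avg_cv g M.
Proof.
  destruct mt_lim as [M HM]. exists M.
  intros eps He.
  destruct (HM (eps/3)) as [N1 [HN1 H1]]; [lra|].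
  destruct (mt_window_avg (eps/3)) as [N2 [HN2 H2]]; [lra|].
  exists (N1 + N2). split; [lra|]. intros T HT.
  have ex : forall a b, ex_RInt g a b by (intros; apply mt_ex; auto).
  exists (RInt g (Rmin 0 T) (Rmax 0 T)). split.
  { exists (ex_RInt_Reals_0 _ _ _ (ex _ _)). symmetry; apply RInt_Reals. }
  destruct (Rle_dec 0 T) as [hT|hT].
  - have -> : Rmin 0 T = 0 by apply Rmin_left; lra.
    have -> : Rmax 0 T = T by apply Rmax_right; lra.
    have -> : Rabs T = T by apply Rabs_right; lra.
    rewrite Rabs_right in HT; [|lra].
    have h := H1 T ltac:(lra).
    unfold avg in h; rewrite Rplus_0_l in h. lra.
  - have -> : Rmin 0 T = T by apply Rmin_right; lra.
    have -> : Rmax 0 T = 0 by apply Rmax_left; lra.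
    have -> : Rabs T = - T by apply Rabs_left; lra.
    rewrite Rabs_left in HT; [|lra].
    have h1 := H1 (-T) ltac:(lra).
    have h2 := H2 (-T) T ltac:(lra).
    unfold avg in h1, h2. replace (T + - T) with 0 in h2 by ring.
    replace (RInt g T 0 / - T - M) with ((RInt g T 0 / - T - RInt g 0 (0 + - T) / - T) + (RInt g 0 (0 + - T) / - T - M)) by ring.
    eapply Rle_lt_trans; [apply Rabs_triang|]. lra.
Qed.

End MeanThm2.

Lemma le_eps_C x K C : 0 < C -> (forall eps, 0 < eps -> x <= K + eps * C) -> x <= K.
Proof.
  intros HC H. destruct (Rle_dec x K) as [h|h]; auto.
  have := H ((x - K) / (2 * C)) ltac:(apply Rdiv_lt_0_compat; lra).
  have -> : (x - K) / (2 * C) * C = (x - K) / 2 by (field; lra). lra.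
Qed.

Lemma tav_int f M eps : time_avg_cv f M -> 0 < eps -> exists N, 0 < N /\ forall T, N < T ->
  ex_RInt f 0 T /\ Rabs (RInt f 0 T / T - M) < eps.
Proof.
  intros H He. destruct (H eps He) as [N [HN HT]]. exists N; split; auto.
  intros T hT. destruct (HT T ltac:(rewrite Rabs_right; lra)) as [v [[pr Hv] Hl]].
  move: pr Hv Hl.
  have -> : Rmin 0 T = 0 by apply Rmin_left; lra.
  have -> : Rmax 0 T = T by apply Rmax_right; lra.
  have -> : Rabs T = T by apply Rabs_right; lra.
  intros pr Hv Hl. split. apply ex_RInt_Reals_1; auto.
  rewrite (RInt_Reals _ _ _ pr) Hv. auto.
Qed.

Lemma abs4 x y z w : Rabs (x - y + z + w) <= Rabs x + Rabs y + Rabs z + Rabs w.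
Proof.
  have := Rabs_triang (x - y + z) w. have := Rabs_triang (x - y) z.
  have := Rabs_triang x (- y). rewrite Rabs_Ropp. unfold Rminus. lra.
Qed.

Lemma tav_bound3 f1 f2 f3 M1 M2 M3 c K :
  time_avg_cv f1 M1 -> time_avg_cv f2 M2 -> time_avg_cv f3 M3 ->
  (forall t, Rabs (f1 t - f2 t - c * f3 t) <= K) ->
  Rabs (M1 - M2 - c * M3) <= K.
Proof.
  intros H1 H2 H3 HK.
  apply (le_eps_C _ _ (3 + Rabs c)); [have := Rabs_pos c; lra|].
  intros eps He.
  destruct (tav_int f1 M1 eps H1 He) as [N1 [P1 Q1]].
  destruct (tav_int f2 M2 eps H2 He) as [N2 [P2 Q2]].
  destruct (tav_int f3 M3 eps H3 He) as [N3 [P3 Q3]].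
  set T := N1 + N2 + N3 + 1.
  have T0 : 0 < T by (unfold T; lra).
  destruct (Q1 T ltac:(unfold T; lra)) as [e1 q1].
  destruct (Q2 T ltac:(unfold T; lra)) as [e2 q2].
  destruct (Q3 T ltac:(unfold T; lra)) as [e3 q3].
  have i := is_RInt_minus _ _ _ _ _ _ (is_RInt_minus _ _ _ _ _ _ (RInt_correct _ _ _ e1) (RInt_correct _ _ _ e2)) (is_RInt_scal _ _ _ c _ (RInt_correct _ _ _ e3)).
  have bnd := abs_RInt_le_const _ 0 T K ltac:(lra) (ex_intro _ _ i) (fun t _ => HK t).
  rewrite (is_RInt_unique _ _ _ _ i) in bnd.
  change (Rabs (RInt f1 0 T - RInt f2 0 T - c * RInt f3 0 T) <= (T - 0) * K) in bnd.
  move: bnd q1 q2 q3.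
  set a := RInt f1 0 T. set b := RInt f2 0 T. set d := RInt f3 0 T.
  move=> bnd q1 q2 q3.
  have E : M1 - M2 - c * M3 = (a - b - c * d) / T - (a / T - M1) + (b / T - M2) + c * (d / T - M3).
  { field. apply Rgt_not_eq, T0. }
  rewrite E.
  have t1 : Rabs ((a - b - c * d) / T) <= K.
  { apply abs_div_le. exact T0. eapply Rle_trans; [exact bnd| right; ring]. }
  have t4 : Rabs (c * (d / T - M3)) <= Rabs c * eps by (rewrite Rabs_mult; apply Rmult_le_compat_l; [apply Rabs_pos|lra]).
  have := abs4 ((a - b - c * d) / T) (a / T - M1) (b / T - M2) (c * (d / T - M3)).
  nra.
Qed.


Lemma Phi_fst n w (a : Cn n) j : fst (Phi w a j) = cos (w j) * fst (a j) - sin (w j) * snd (a j).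
Proof. by []. Qed.
Lemma Phi_snd n w (a : Cn n) j : snd (Phi w a j) = cos (w j) * snd (a j) + sin (w j) * fst (a j).
Proof. rewrite /Phi /Cmul /Cexpi /=. ring. Qed.

Lemma cs_bnd x : Rabs (cos x) <= 1 /\ Rabs (sin x) <= 1.
Proof. have := COS_bound x. have := SIN_bound x. move=> [? ?] [? ?]. split; unfold Rabs; destruct Rcase_abs; lra. Qed.

Lemma lin_bnd c s x y K : Rabs c <= 1 -> Rabs s <= 1 -> Rabs x <= K -> Rabs y <= K ->
  Rabs (c * x - s * y) <= 2 * K /\ Rabs (c * y + s * x) <= 2 * K.
Proof.
  move=> hc hs hx hy.
  have a1 : Rabs (c * x) <= K by (rewrite Rabs_mult; have := Rabs_pos x; have := Rabs_pos c; nra).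
  have a2 : Rabs (s * y) <= K by (rewrite Rabs_mult; have := Rabs_pos y; have := Rabs_pos s; nra).
  have a3 : Rabs (c * y) <= K by (rewrite Rabs_mult; have := Rabs_pos y; have := Rabs_pos c; nra).
  have a4 : Rabs (s * x) <= K by (rewrite Rabs_mult; have := Rabs_pos x; have := Rabs_pos s; nra).
  split; [have := abs_sub_le (c * x) (s * y)| have := Rabs_triang (c * y) (s * x)]; lra.
Qed.

Lemma Phi_box n M w (a : Cn n) : Cbox M a -> Cbox (2 * M) (Phi w a).
Proof.
  move=> Ha k. rewrite Phi_fst Phi_snd. have [h1 h2] := Ha k. have [c1 c2] := cs_bnd (w k).
  by apply lin_bnd.
Qed.

Lemma Phi_cdle n w (b c : Cn n) d : cdle b c d -> cdle (Phi w b) (Phi w c) (2 * d).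
Proof.
  move=> H k. rewrite !Phi_fst !Phi_snd. have [h1 h2] := H k. have [c1 c2] := cs_bnd (w k).
  have [e1 e2] := lin_bnd (cos (w k)) (sin (w k)) _ _ d c1 c2 h1 h2.
  split.
  - have -> : cos (w k) * fst (b k) - sin (w k) * snd (b k) - (cos (w k) * fst (c k) - sin (w k) * snd (c k))
      = cos (w k) * (fst (b k) - fst (c k)) - sin (w k) * (snd (b k) - snd (c k)) by ring. done.
  - have -> : cos (w k) * snd (b k) + sin (w k) * fst (b k) - (cos (w k) * snd (c k) + sin (w k) * fst (c k))
      = cos (w k) * (snd (b k) - snd (c k)) + sin (w k) * (fst (b k) - fst (c k)) by ring. done.
Qed.

Lemma near_cdle n r (b c : Cn n) : near r b c -> cdle c b r.
Proof. move=> H k. have [h1 h2] := H k. split; lra. Qed.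

Lemma cdle_near n r d (b c : Cn n) : cdle c b d -> d < r -> near r b c.
Proof. move=> H hr k. have [h1 h2] := H k. split; lra. Qed.

Lemma Phi_close n M d w w' (a : Cn n) : 0 < d -> Cbox M a -> (forall k, closeZ d (w k - w' k)) ->
  near ((2 * M + 1) * d) (Phi w' a) (Phi w a).
Proof.
  move=> d0 Ha H k. rewrite !Phi_fst !Phi_snd.
  have [c1 s1] := trig_close d (w k) (w' k) (H k).
  have [h1 h2] := Ha k.
  have M0 : 0 <= M by (have := Rabs_pos (fst (a k)); lra).
  have E1 : forall p q, Rabs (p - q) < d -> forall x, Rabs x <= M -> Rabs (p * x - q * x) <= M * d.
  { move=> p q hpq x hx. rewrite -Rmult_minus_distr_r Rabs_mult. have := Rabs_pos x. have := Rabs_pos (p - q). nra. }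
  have := E1 _ _ c1 _ h1. have := E1 _ _ s1 _ h2. have := E1 _ _ c1 _ h2. have := E1 _ _ s1 _ h1.
  move=> u1 u2 u3 u4. split.
  - have -> : cos (w k) * fst (a k) - sin (w k) * snd (a k) - (cos (w' k) * fst (a k) - sin (w' k) * snd (a k))
      = (cos (w k) * fst (a k) - cos (w' k) * fst (a k)) - (sin (w k) * snd (a k) - sin (w' k) * snd (a k)) by ring.
    have := abs_sub_le (cos (w k) * fst (a k) - cos (w' k) * fst (a k)) (sin (w k) * snd (a k) - sin (w' k) * snd (a k)).
    nra.
  - have -> : cos (w k) * snd (a k) + sin (w k) * fst (a k) - (cos (w' k) * snd (a k) + sin (w' k) * fst (a k))
      = (cos (w k) * snd (a k) - cos (w' k) * snd (a k)) + (sin (w k) * fst (a k) - sin (w' k) * fst (a k)) by ring.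
    have := Rabs_triang (cos (w k) * snd (a k) - cos (w' k) * snd (a k)) (sin (w k) * fst (a k) - sin (w' k) * fst (a k)).
    nra.
Qed.

Definition amax {n : nat} (a : Cn n) : R := fsum _ (fun k : 'I_n => Rabs (fst (a k)) + Rabs (snd (a k))).

Lemma amax_box n (a : Cn n) : Cbox (amax a) a.
Proof.
  move=> k. have := fsum_ge _ (fun k : 'I_n => Rabs (fst (a k)) + Rabs (snd (a k))) k.
  rewrite /amax. move=> /(_ (fun y => Rplus_le_le_0_compat _ _ (Rabs_pos _) (Rabs_pos _))).
  have := Rabs_pos (fst (a k)). have := Rabs_pos (snd (a k)). move=> *. split; lra.
Qed.
Lemma amax_pos n (a : Cn n) : 0 <= amax a.
Proof.
  rewrite /amax /fsum. elim: (enum _) => [|x l IH] /=; [lra|].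
  have := Rabs_pos (fst (a x)). have := Rabs_pos (snd (a x)). move=> *. apply Rplus_le_le_0_compat; [lra|exact IH].
Qed.

Lemma near_box n M r (a b : Cn n) : Cbox M a -> near r a b -> Cbox (M + r) b.
Proof.
  move=> Ha H k. have [h1 h2] := Ha k. have [n1 n2] := H k. split.
  - have := Rabs_triang (fst (b k) - fst (a k)) (fst (a k)). have -> : fst (b k) - fst (a k) + fst (a k) = fst (b k) by ring. lra.
  - have := Rabs_triang (snd (b k) - snd (a k)) (snd (a k)). have -> : snd (b k) - snd (a k) + snd (a k) = snd (b k) by ring. lra.
Qed.

Lemma cont_local_bound n (g : Cn n -> R) : continuous_Cn g -> forall p, exists r K, 0 < r /\ forall c, near r p c -> Rabs (g c) <= K.
Proof.
  move=> H p. have [d [d0 Hd]] := H p 1 Rlt_0_1. exists d, (Rabs (g p) + 1). split; auto.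
  move=> c Hc. have := Hd c Hc. have := Rabs_triang (g c - g p) (g p). have -> : g c - g p + g p = g c by ring. lra.
Qed.


Definition GoodP {n : nat} (P : ('I_n -> R) -> R) : Prop :=
  (exists B, forall w, Rabs (P w) <= B) /\
  (forall eps, 0 < eps -> exists del, 0 < del /\ forall w w',
     (forall k, closeZ del (w k - w' k)) -> Rabs (P w - P w') <= eps).

Lemma closeZ_all_mono n d1 d2 (w w' : 'I_n -> R) : d1 <= d2 ->
  (forall k, closeZ d1 (w k - w' k)) -> forall k, closeZ d2 (w k - w' k).
Proof. move=> h H k. exact: closeZ_mono h (H k). Qed.

Lemma good_plus n (P1 P2 : ('I_n -> R) -> R) : GoodP P1 -> GoodP P2 -> GoodP (fun w => P1 w + P2 w).
Proof.
  move=> [[B1 hB1] U1] [[B2 hB2] U2]. split.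
  - exists (B1 + B2) => w. have := Rabs_triang (P1 w) (P2 w). have := hB1 w. have := hB2 w. lra.
  - move=> eps he. have [d1 [d10 h1]] := U1 (eps/2) ltac:(lra). have [d2 [d20 h2]] := U2 (eps/2) ltac:(lra).
    exists (Rmin d1 d2). split; first by apply Rmin_glb_lt.
    move=> w w' H. have := h1 w w' (closeZ_all_mono _ _ _ _ _ (Rmin_l _ _) H).
    have := h2 w w' (closeZ_all_mono _ _ _ _ _ (Rmin_r _ _) H).
    have := Rabs_triang (P1 w - P1 w') (P2 w - P2 w').
    have -> : P1 w - P1 w' + (P2 w - P2 w') = P1 w + P2 w - (P1 w' + P2 w') by ring. lra.
Qed.

Lemma good_opp n (P : ('I_n -> R) -> R) : GoodP P -> GoodP (fun w => - P w).
Proof.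
  move=> [[B hB] U]. split.
  - exists B => w. rewrite Rabs_Ropp. apply hB.
  - move=> eps he. have [d [d0 h]] := U eps he. exists d. split; auto.
    move=> w w' H. have -> : - P w - - P w' = - (P w - P w') by ring. rewrite Rabs_Ropp. by apply h.
Qed.

Lemma good_mult n (P1 P2 : ('I_n -> R) -> R) : GoodP P1 -> GoodP P2 -> GoodP (fun w => P1 w * P2 w).
Proof.
  move=> [[B1 hB1] U1] [[B2 hB2] U2].
  have B10 : 0 <= B1 by (have := hB1 (fun _ => 0); have := Rabs_pos (P1 (fun _ => 0)); lra).
  have B20 : 0 <= B2 by (have := hB2 (fun _ => 0); have := Rabs_pos (P2 (fun _ => 0)); lra).
  split.
  - exists (B1 * B2) => w. rewrite Rabs_mult. apply Rmult_le_compat; auto using Rabs_pos.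
  - move=> eps he.
    have [d1 [d10 h1]] := U1 (eps / (2 * (B2 + 1))) ltac:(apply Rdiv_lt_0_compat; lra).
    have [d2 [d20 h2]] := U2 (eps / (2 * (B1 + 1))) ltac:(apply Rdiv_lt_0_compat; lra).
    exists (Rmin d1 d2). split; first by apply Rmin_glb_lt.
    move=> w w' H. have e1 := h1 w w' (closeZ_all_mono _ _ _ _ _ (Rmin_l _ _) H).
    have e2 := h2 w w' (closeZ_all_mono _ _ _ _ _ (Rmin_r _ _) H).
    have -> : P1 w * P2 w - P1 w' * P2 w' = P1 w * (P2 w - P2 w') + P2 w' * (P1 w - P1 w') by ring.
    eapply Rle_trans; [apply Rabs_triang|]. rewrite !Rabs_mult.
    have t1 : Rabs (P1 w) * Rabs (P2 w - P2 w') <= (B1 + 1) * (eps / (2 * (B1 + 1))).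
    { apply Rmult_le_compat; auto using Rabs_pos. have := hB1 w; lra. }
    have t2 : Rabs (P2 w') * Rabs (P1 w - P1 w') <= (B2 + 1) * (eps / (2 * (B2 + 1))).
    { apply Rmult_le_compat; auto using Rabs_pos. have := hB2 w'; lra. }
    have q1 : (B1 + 1) * (eps / (2 * (B1 + 1))) = eps / 2 by (field; lra).
    have q2 : (B2 + 1) * (eps / (2 * (B2 + 1))) = eps / 2 by (field; lra).
    rewrite q1 in t1. rewrite q2 in t2.
    lra.
Qed.

Lemma good_cos n (j : 'I_n) : GoodP (fun w : 'I_n -> R => cos (w j)).
Proof.
  split; first by exists 1 => w; apply cs_bnd.
  move=> eps he. exists eps. split; auto. move=> w w' H.
  have [h1 _] := trig_close eps (w j) (w' j) (H j). lra.
Qed.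
Lemma good_sin n (j : 'I_n) : GoodP (fun w : 'I_n -> R => sin (w j)).
Proof.
  split; first by exists 1 => w; apply cs_bnd.
  move=> eps he. exists eps. split; auto. move=> w w' H.
  have [_ h1] := trig_close eps (w j) (w' j) (H j). lra.
Qed.

Lemma good_rot n (g : Cn n -> R) (a : Cn n) : continuous_Cn g ->
  GoodP (fun w : 'I_n -> R => g (Phi (fun k => - w k) a)).
Proof.
  move=> gc. have M0 := amax_pos n a. have Ha := amax_box n a. split.
  - have [K [K0 HK]] := box_bound n (2 * amax a) g (cont_local_bound n g gc).
    exists K => w. apply HK. by apply Phi_box.
  - move=> eps he. have [d0 [d00 Hd]] := box_unif n (2 * amax a) g gc eps he.
    exists (d0 / (2 * amax a + 1)). split; first by apply Rdiv_lt_0_compat; lra.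
    move=> w w' H.
    have H' : forall k, closeZ (d0 / (2 * amax a + 1)) ((fun k => - w k) k - (fun k => - w' k) k).
    { move=> k /=. have -> : - w k - - w' k = - (w k - w' k) by ring. by apply closeZ_opp. }
    have := Phi_close n (amax a) (d0 / (2 * amax a + 1)) _ _ a ltac:(apply Rdiv_lt_0_compat; lra) Ha H'.
    have -> : (2 * amax a + 1) * (d0 / (2 * amax a + 1)) = d0 by (field; lra).
    move=> Hn. left. apply Hd; auto. by apply Phi_box.
Qed.

Lemma cont_of_eps (g : R -> R) t : (forall eps, 0 < eps -> exists del, 0 < del /\
  forall t', Rabs (t' - t) < del -> Rabs (g t' - g t) < eps) -> continuous g t.
Proof.
  move=> H. apply continuity_pt_filterlim.
  move=> eps he. have [d [d0 Hd]] := H eps he. exists d. split; auto.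
  move=> x [_ hx]. apply Hd. exact hx.
Qed.

Lemma gen_mean n (Lam : 'I_n -> R) (P : ('I_n -> R) -> R) : GoodP P ->
  exists M, time_avg_cv (fun t => P (fun k => Lam k * t)) M.
Proof.
  move=> [[B hB] U].
  set S := fsum _ (fun k : 'I_n => Rabs (Lam k)).
  have S0 : 0 <= S.
  { rewrite /S /fsum. elim: (enum _) => [|x l IH] /=; [lra|].
    have := Rabs_pos (Lam x). move=> *. apply Rplus_le_le_0_compat; [lra|exact IH]. }
  have SL : forall k, Rabs (Lam k) <= S by (move=> k; apply (fsum_ge _ (fun k : 'I_n => Rabs (Lam k)) k (fun y => Rabs_pos _))).
  apply: (mean_exists _ _ B).
  - move=> t. apply cont_of_eps. move=> eps he. have [d [d0 Hd]] := U (eps / 2) ltac:(lra).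
    exists (d / (S + 1)). split; first by apply Rdiv_lt_0_compat; lra.
    move=> t' ht. have := Hd (fun k => Lam k * t') (fun k => Lam k * t).
    have : forall k, closeZ d (Lam k * t' - Lam k * t).
    { move=> k. exists 0%Z. rewrite Rmult_0_r Rminus_0_r.
      have -> : Lam k * t' - Lam k * t = Lam k * (t' - t) by ring. rewrite Rabs_mult.
      have := SL k. have := Rabs_pos (t' - t). have := Rabs_pos (Lam k).
      have : Rabs (t' - t) * (S + 1) < d.
      { have := Rmult_lt_compat_r (S + 1) _ _ ltac:(lra) ht. have -> : d / (S + 1) * (S + 1) = d by (field; lra). done. }
      nra. }
    move=> h1 h2. have := h2 h1. lra.
  - move=> t; apply hB.
  - move=> eps he. have [d [d0 Hd]] := U eps he.
    have [L [L0 HL]] := kron n Lam d d0.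
    exists L. split; auto. move=> s. have [tau [h1 h2]] := HL s. exists tau. split; auto.
    move=> t. apply Hd. move=> k /=. by have -> : Lam k * (t + tau) - Lam k * t = Lam k * tau by ring.
Qed.


Lemma Cnorm_le z : Cnorm z <= Rabs (fst z) + Rabs (snd z).
Proof.
  rewrite /Cnorm. rewrite -(sqrt_pow2 (Rabs (fst z) + Rabs (snd z))); last by (have := Rabs_pos (fst z); have := Rabs_pos (snd z); lra).
  apply sqrt_le_1_alt. rewrite -(pow2_abs (fst z)) -(pow2_abs (snd z)).
  have := Rabs_pos (fst z). have := Rabs_pos (snd z). move=> *. nra.
Qed.
Lemma Cnorm_fst z : Rabs (fst z) <= Cnorm z.
Proof.
  rewrite /Cnorm. rewrite -(sqrt_pow2 (Rabs (fst z))); last by apply Rabs_pos.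
  apply sqrt_le_1_alt. rewrite pow2_abs. have : 0 <= snd z ^ 2 by nra. lra.
Qed.
Lemma Cnorm_snd z : Rabs (snd z) <= Cnorm z.
Proof.
  rewrite /Cnorm. rewrite -(sqrt_pow2 (Rabs (snd z))); last by apply Rabs_pos.
  apply sqrt_le_1_alt. rewrite pow2_abs. have : 0 <= fst z ^ 2 by nra. lra.
Qed.

Lemma Cbox_mono n M1 M2 (c : Cn n) : M1 <= M2 -> Cbox M1 c -> Cbox M2 c.
Proof. move=> h H k. have [a b] := H k. split; lra. Qed.

Lemma deriv_of_est (F : R -> R) x0 l :
  (forall eps, 0 < eps -> exists del, 0 < del /\ forall s, Rabs s < del ->
     Rabs (F (x0 + s) - F x0 - s * l) <= Rabs s * eps) -> derivable_pt_lim F x0 l.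
Proof.
  move=> H eps he. have [d [d0 Hd]] := H (eps / 2) ltac:(lra).
  exists (mkposreal d d0) => s hs hsd /=. have := Hd s hsd.
  have sp : 0 < Rabs s by apply Rabs_pos_lt.
  have -> : (F (x0 + s) - F x0) / s - l = (F (x0 + s) - F x0 - s * l) / s by (field; auto).
  move=> h1. have := abs_div_le _ (Rabs s) (eps / 2) sp.
  rewrite /Rdiv Rabs_mult Rabs_inv. move=> h2.
  have : Rabs (F (x0 + s) - F x0 - s * l) * / Rabs s <= eps / 2.
  { apply (Rmult_le_reg_r (Rabs s)); auto. rewrite Rmult_assoc Rinv_l; lra. }
  lra.
Qed.

Section Main.
Variable n : nat.
Variable h : Cn n -> R.
Variables hx hy : 'I_n -> Cn n -> R.
Hypothesis hp : partials h hx hy.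
Hypothesis hxc : forall j, continuous_Cn (hx j).
Hypothesis hyc : forall j, continuous_Cn (hy j).
Hypothesis hxl : forall j, loc_lip_R (hx j).
Hypothesis hyl : forall j, loc_lip_R (hy j).

Lemma dcont (f : R -> R) l : (forall x, derivable_pt_lim f x (l x)) -> forall x, continuity_pt f x.
Proof. move=> H x. apply (derivable_continuous_pt f x (exist _ (l x) (H x))). Qed.

Lemma smvt_x c j y u v : exists s, Rmin u v <= s <= Rmax u v /\
  h (upd c j (v, y)) - h (upd c j (u, y)) = hx j (upd c j (s, y)) * (v - u).
Proof.
  have D : forall s, derivable_pt_lim (fun s => h (upd c j (s, y))) s (hx j (upd c j (s, y))).
  { move=> s. have := proj1 (hp (upd c j (s, y)) j). rewrite /pd_x upd_at /=.
    by have -> : (fun s0 => h (upd (upd c j (s, y)) j (s0, y))) = (fun s0 => h (upd c j (s0, y))) by apply functional_extensionality => ?; rewrite upd_upd. }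
  have [s [hs E]] := MVT_gen (fun s => h (upd c j (s, y))) u v (fun s => hx j (upd c j (s, y)))
    (fun x _ => proj2 (is_derive_Reals _ _ _) (D x)) (fun x _ => dcont _ _ D x).
  by exists s.
Qed.

Lemma smvt_y c j x u v : exists s, Rmin u v <= s <= Rmax u v /\
  h (upd c j (x, v)) - h (upd c j (x, u)) = hy j (upd c j (x, s)) * (v - u).
Proof.
  have D : forall s, derivable_pt_lim (fun s => h (upd c j (x, s))) s (hy j (upd c j (x, s))).
  { move=> s. have := proj2 (hp (upd c j (x, s)) j). rewrite /pd_y upd_at /=.
    by have -> : (fun s0 => h (upd (upd c j (x, s)) j (x, s0))) = (fun s0 => h (upd c j (x, s0))) by apply functional_extensionality => ?; rewrite upd_upd. }
  have [s [hs E]] := MVT_gen (fun s => h (upd c j (x, s))) u v (fun s => hy j (upd c j (x, s)))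
    (fun x _ => proj2 (is_derive_Reals _ _ _) (D x)) (fun x _ => dcont _ _ D x).
  by exists s.
Qed.

Lemma btw_le s u v : Rmin u v <= s <= Rmax u v -> Rabs (s - u) <= Rabs (v - u).
Proof. rewrite /Rmin /Rmax /Rabs. repeat case: Rle_dec; repeat case: Rcase_abs; intros; lra. Qed.

Lemma near_upd (b : Cn n) j p q r : Rabs (p - fst (b j)) < r -> Rabs (q - snd (b j)) < r -> 0 < r ->
  near r b (upd b j (p, q)).
Proof.
  move=> h1 h2 r0 k. rewrite /upd. case: eqP => [->|_] /=; first by split.
  rewrite !Rminus_diag Rabs_R0. by split.
Qed.

Lemma two_step (b : Cn n) j M p q s eps del :
  Cbox M b -> 0 < del ->
  (forall c, near del b c -> Rabs (hx j c - hx j b) < eps /\ Rabs (hy j c - hy j b) < eps) ->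
  Rabs (s * p) < del -> Rabs (s * q) < del ->
  Rabs (h (upd b j (fst (b j) + s * p, snd (b j) + s * q)) - h b - (s * p * hx j b + s * q * hy j b))
    <= Rabs (s * p) * eps + Rabs (s * q) * eps.
Proof.
  move=> Hb d0 U hp1 hq1.
  set X := fst (b j). set Y := snd (b j).
  have [u1 [hu1 E1]] := smvt_x b j Y X (X + s * p).
  have [u2 [hu2 E2]] := smvt_y b j (X + s * p) Y (Y + s * q).
  have eb : upd b j (X, Y) = b by rewrite /X /Y -surjective_pairing upd_same.
  rewrite eb in E1.
  have n1 : near del b (upd b j (u1, Y)).
  { apply near_upd; auto.
    - have := btw_le _ _ _ hu1. have -> : X + s * p - X = s * p by ring. rewrite -/X. lra.
    - rewrite -/Y Rminus_diag Rabs_R0. lra. }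
  have n2 : near del b (upd b j (X + s * p, u2)).
  { apply near_upd; auto.
    - rewrite -/X. have -> : X + s * p - X = s * p by ring. lra.
    - have := btw_le _ _ _ hu2. have -> : Y + s * q - Y = s * q by ring. rewrite -/Y. lra. }
  have [a1 _] := U _ n1. have [_ a2] := U _ n2.
  have -> : h (upd b j (X + s * p, Y + s * q)) - h b - (s * p * hx j b + s * q * hy j b)
    = (h (upd b j (X + s * p, Y + s * q)) - h (upd b j (X + s * p, Y))) + (h (upd b j (X + s * p, Y)) - h b)
      - (s * p * hx j b + s * q * hy j b) by ring.
  rewrite E1 E2.
  have -> : hy j (upd b j (X + s * p, u2)) * (Y + s * q - Y) + hx j (upd b j (u1, Y)) * (X + s * p - X) -
    (s * p * hx j b + s * q * hy j b) = (s * q) * (hy j (upd b j (X + s * p, u2)) - hy j b) + (s * p) * (hx j (upd b j (u1, Y)) - hx j b) by ring.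
  eapply Rle_trans; [apply Rabs_triang|]. rewrite (Rabs_mult (s * q)) (Rabs_mult (s * p)).
  have t1 := Rmult_le_compat_l (Rabs (s * q)) _ _ (Rabs_pos _) (Rlt_le _ _ a2).
  have t2 := Rmult_le_compat_l (Rabs (s * p)) _ _ (Rabs_pos _) (Rlt_le _ _ a1).
  lra.
Qed.

Lemma Phi_upd_x w (a : Cn n) j s : Phi w (upd a j (fst (a j) + s, snd (a j))) =
  upd (Phi w a) j (fst (Phi w a j) + s * cos (w j), snd (Phi w a j) + s * sin (w j)).
Proof.
  apply functional_extensionality => k. rewrite /Phi /upd. case: eqP => [->|_] //.
  rewrite /Cmul /Cexpi /=. f_equal; ring.
Qed.
Lemma Phi_upd_y w (a : Cn n) j s : Phi w (upd a j (fst (a j), snd (a j) + s)) =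
  upd (Phi w a) j (fst (Phi w a j) + s * - sin (w j), snd (Phi w a j) + s * cos (w j)).
Proof.
  apply functional_extensionality => k. rewrite /Phi /upd. case: eqP => [->|_] //.
  rewrite /Cmul /Cexpi /=. f_equal; ring.
Qed.

Lemma unif_hxy (a : Cn n) j eps : 0 < eps -> exists del, 0 < del /\ forall w c,
  near del (Phi w a) c -> Rabs (hx j c - hx j (Phi w a)) < eps /\ Rabs (hy j c - hy j (Phi w a)) < eps.
Proof.
  move=> he.
  have [d1 [d10 H1]] := box_unif n (2 * amax a) (hx j) (hxc j) eps he.
  have [d2 [d20 H2]] := box_unif n (2 * amax a) (hy j) (hyc j) eps he.
  exists (Rmin d1 d2). split; first by apply Rmin_glb_lt.
  move=> w c Hc. have Hb := Phi_box n _ w a (amax_box n a). split.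
  - apply H1; auto. apply: near_mono _ Hc. apply Rmin_l.
  - apply H2; auto. apply: near_mono _ Hc. apply Rmin_r.
Qed.

Lemma PE_x (a : Cn n) j eps : 0 < eps -> exists del, 0 < del /\ forall s, Rabs s < del -> forall w,
  Rabs (h (Phi w (upd a j (fst (a j) + s, snd (a j)))) - h (Phi w a)
        - s * (cos (w j) * hx j (Phi w a) + sin (w j) * hy j (Phi w a))) <= Rabs s * eps.
Proof.
  move=> he. have [d [d0 U]] := unif_hxy a j (eps / 2) ltac:(lra).
  exists d. split; auto. move=> s hs w. rewrite Phi_upd_x.
  have [c1 s1] := cs_bnd (w j).
  have p1 : Rabs (s * cos (w j)) <= Rabs s by (rewrite Rabs_mult; have := Rabs_pos s; nra).
  have p2 : Rabs (s * sin (w j)) <= Rabs s by (rewrite Rabs_mult; have := Rabs_pos s; nra).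
  have := two_step (Phi w a) j (2 * amax a) (cos (w j)) (sin (w j)) s (eps / 2) d
    (Phi_box n _ w a (amax_box n a)) d0 (U w) ltac:(lra) ltac:(lra).
  have -> : s * (cos (w j) * hx j (Phi w a) + sin (w j) * hy j (Phi w a)) =
    s * cos (w j) * hx j (Phi w a) + s * sin (w j) * hy j (Phi w a) by ring.
  move=> H. eapply Rle_trans; [exact H|]. nra.
Qed.

Lemma PE_y (a : Cn n) j eps : 0 < eps -> exists del, 0 < del /\ forall s, Rabs s < del -> forall w,
  Rabs (h (Phi w (upd a j (fst (a j), snd (a j) + s))) - h (Phi w a)
        - s * (- sin (w j) * hx j (Phi w a) + cos (w j) * hy j (Phi w a))) <= Rabs s * eps.
Proof.
  move=> he. have [d [d0 U]] := unif_hxy a j (eps / 2) ltac:(lra).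
  exists d. split; auto. move=> s hs w. rewrite Phi_upd_y.
  have [c1 s1] := cs_bnd (w j).
  have p1 : Rabs (s * cos (w j)) <= Rabs s by (rewrite Rabs_mult; have := Rabs_pos s; nra).
  have p2 : Rabs (s * - sin (w j)) <= Rabs s by (rewrite Rabs_mult Rabs_Ropp; have := Rabs_pos s; nra).
  have := two_step (Phi w a) j (2 * amax a) (- sin (w j)) (cos (w j)) s (eps / 2) d
    (Phi_box n _ w a (amax_box n a)) d0 (U w) ltac:(lra) ltac:(lra).
  have -> : s * (- sin (w j) * hx j (Phi w a) + cos (w j) * hy j (Phi w a)) =
    s * - sin (w j) * hx j (Phi w a) + s * cos (w j) * hy j (Phi w a) by ring.
  move=> H. eapply Rle_trans; [exact H|]. nra.
Qed.

Lemma all_bound M : exists K, 0 <= K /\ forall j c, Cbox M c -> Rabs (hx j c) <= K /\ Rabs (hy j c) <= K.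
Proof.
  have H : forall j, exists K, 0 <= K /\ forall c, Cbox M c -> Rabs (hx j c) <= K /\ Rabs (hy j c) <= K.
  { move=> j. have [K1 [K10 H1]] := box_bound n M (hx j) (cont_local_bound n _ (hxc j)).
    have [K2 [K20 H2]] := box_bound n M (hy j) (cont_local_bound n _ (hyc j)).
    exists (K1 + K2). split; first lra. move=> c Hc. have := H1 c Hc. have := H2 c Hc. lra. }
  set Kf := fun j => proj1_sig (constructive_indefinite_description _ (H j)).
  have KfP : forall j, 0 <= Kf j /\ forall c, Cbox M c -> Rabs (hx j c) <= Kf j /\ Rabs (hy j c) <= Kf j.
  { move=> j. exact (proj2_sig (constructive_indefinite_description _ (H j))). }
  exists (fsum _ Kf). split.
  - rewrite /fsum. elim: (enum _) => [|x l IH] /=; [lra|]. apply Rplus_le_le_0_compat; [apply KfP|exact IH].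
  - move=> j c Hc. have := fsum_ge _ Kf j (fun y => proj1 (KfP y)). have := proj2 (KfP j) c Hc. lra.
Qed.

Lemma hcont : continuous_Cn h.
Proof.
  move=> a eps he.
  have [K [K0 HK]] := all_bound (amax a + 1).
  have Hl := box_lip_h n h hx hy hp (amax a + 1) K K0 HK.
  set C := 2 * INR n * K.
  have C0 : 0 <= C by (rewrite /C; have := pos_INR n; nra).
  exists (Rmin 1 (eps / (C + 1))). split.
  { apply Rmin_glb_lt; [lra| apply Rdiv_lt_0_compat; lra]. }
  move=> b Hb.
  have d1 := Rmin_l 1 (eps / (C + 1)). have d2 := Rmin_r 1 (eps / (C + 1)).
  have Bb : Cbox (amax a + 1) b by (apply: Cbox_mono _ (near_box n _ _ _ _ (amax_box n a) Hb); lra).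
  have Ba : Cbox (amax a + 1) a by (apply: Cbox_mono _ (amax_box n a); lra).
  have dpos : 0 <= Rmin 1 (eps / (C + 1)) by (apply Rmin_glb; [lra| left; apply Rdiv_lt_0_compat; lra]).
  have := Hl b a Bb Ba _ dpos (near_cdle n _ _ _ Hb).
  rewrite -/C. move=> H1. eapply Rle_lt_trans; [exact H1|].
  have : C * Rmin 1 (eps / (C + 1)) <= C * (eps / (C + 1)) by (apply Rmult_le_compat_l; auto).
  have : C * (eps / (C + 1)) < eps.
  { have -> : C * (eps / (C + 1)) = eps - eps / (C + 1) by (field; lra).
    have : 0 < eps / (C + 1) by (apply Rdiv_lt_0_compat; lra). lra. }
  lra.
Qed.

Variable Lam : 'I_n -> R.

Definition Ph (a : Cn n) := fun w : 'I_n -> R => h (Phi (fun k => - w k) a).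
Definition Psnd (a : Cn n) j := fun w : 'I_n -> R => snd (Phi w (Pvf hx hy (Phi (fun k => - w k) a)) j).
Definition Pfst (a : Cn n) j := fun w : 'I_n -> R => fst (Phi w (Pvf hx hy (Phi (fun k => - w k) a)) j).

Lemma good_ext (P Q : ('I_n -> R) -> R) : (forall w, P w = Q w) -> GoodP Q -> GoodP P.
Proof. move=> E. by have -> : P = Q by apply functional_extensionality. Qed.

Lemma Psnd_eq a j w : Psnd a j w = cos (w j) * hx j (Phi (fun k => - w k) a) + sin (w j) * (- hy j (Phi (fun k => - w k) a)).
Proof. by rewrite /Psnd Phi_snd. Qed.
Lemma Pfst_eq a j w : Pfst a j w = cos (w j) * (- hy j (Phi (fun k => - w k) a)) + - (sin (w j) * hx j (Phi (fun k => - w k) a)).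
Proof. rewrite /Pfst Phi_fst /=. ring. Qed.

Lemma good_Ph a : GoodP (Ph a).
Proof. apply good_rot. apply hcont. Qed.
Lemma good_Psnd a j : GoodP (Psnd a j).
Proof.
  apply: good_ext; first by move=> w; apply Psnd_eq.
  apply good_plus; apply good_mult; try apply good_cos; try apply good_sin.
  - apply (good_rot n (hx j) a (hxc j)).
  - apply good_opp. apply (good_rot n (hy j) a (hyc j)).
Qed.
Lemma good_Pfst a j : GoodP (Pfst a j).
Proof.
  apply: good_ext; first by move=> w; apply Pfst_eq.
  apply good_plus; [|apply good_opp]; apply good_mult; try apply good_cos; try apply good_sin.
  - apply good_opp. apply (good_rot n (hy j) a (hyc j)).
  - apply (good_rot n (hx j) a (hxc j)).
Qed.

Definition Hf (a : Cn n) : R := proj1_sig (constructive_indefinite_description _ (gen_mean n Lam _ (good_Ph a))).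
Definition Gx j (a : Cn n) : R := proj1_sig (constructive_indefinite_description _ (gen_mean n Lam _ (good_Psnd a j))).
Definition Fy j (a : Cn n) : R := proj1_sig (constructive_indefinite_description _ (gen_mean n Lam _ (good_Pfst a j))).
Definition Gy j (a : Cn n) : R := - Fy j a.

Lemma Hf_spec a : time_avg_cv (fun t => Ph a (fun k => Lam k * t)) (Hf a).
Proof. exact (proj2_sig (constructive_indefinite_description _ (gen_mean n Lam _ (good_Ph a)))). Qed.
Lemma Gx_spec j a : time_avg_cv (fun t => Psnd a j (fun k => Lam k * t)) (Gx j a).
Proof. exact (proj2_sig (constructive_indefinite_description _ (gen_mean n Lam _ (good_Psnd a j)))). Qed.
Lemma Fy_spec j a : time_avg_cv (fun t => Pfst a j (fun k => Lam k * t)) (Fy j a).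
Proof. exact (proj2_sig (constructive_indefinite_description _ (gen_mean n Lam _ (good_Pfst a j)))). Qed.

Lemma Hf_deriv_x a j : pd_x Hf a j (Gx j a).
Proof.
  rewrite /pd_x. apply deriv_of_est. move=> eps he.
  have [d [d0 Hd]] := PE_x a j eps he. exists d. split; auto. move=> s hs.
  have -> : upd a j (fst (a j), snd (a j)) = a by rewrite -surjective_pairing upd_same.
  have := tav_bound3 _ _ _ _ _ _ s (Rabs s * eps) (Hf_spec (upd a j (fst (a j) + s, snd (a j)))) (Hf_spec a) (Gx_spec j a).
  apply. move=> t. have := Hd s hs (fun k => - (Lam k * t)).
  rewrite /Ph Psnd_eq /= cos_neg sin_neg.
  have -> : s * (cos (Lam j * t) * hx j (Phi (fun k => - (Lam k * t)) a) + - sin (Lam j * t) * hy j (Phi (fun k => - (Lam k * t)) a))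
    = s * (cos (Lam j * t) * hx j (Phi (fun k => - (Lam k * t)) a) + sin (Lam j * t) * - hy j (Phi (fun k => - (Lam k * t)) a)) by ring.
  done.
Qed.

Lemma Hf_deriv_y a j : pd_y Hf a j (Gy j a).
Proof.
  rewrite /pd_y. apply deriv_of_est. move=> eps he.
  have [d [d0 Hd]] := PE_y a j eps he. exists d. split; auto. move=> s hs.
  have -> : upd a j (fst (a j), snd (a j)) = a by rewrite -surjective_pairing upd_same.
  have := tav_bound3 _ _ _ _ _ _ (- s) (Rabs s * eps) (Hf_spec (upd a j (fst (a j), snd (a j) + s))) (Hf_spec a) (Fy_spec j a).
  rewrite /Gy. have -> : s * - Fy j a = - s * Fy j a by ring.
  apply. move=> t. have := Hd s hs (fun k => - (Lam k * t)).
  rewrite /Ph Pfst_eq /= cos_neg sin_neg.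
  have -> : s * (- - sin (Lam j * t) * hx j (Phi (fun k => - (Lam k * t)) a) + cos (Lam j * t) * hy j (Phi (fun k => - (Lam k * t)) a))
    = - s * (cos (Lam j * t) * - hy j (Phi (fun k => - (Lam k * t)) a) + - (sin (Lam j * t) * hx j (Phi (fun k => - (Lam k * t)) a))) by ring.
  done.
Qed.

Lemma lip_of_P (P : Cn n -> ('I_n -> R) -> R) (G : Cn n -> R) :
  (forall b, time_avg_cv (fun t => P b (fun k => Lam k * t)) (G b)) ->
  (forall M, exists L, 0 <= L /\ forall b c, Cbox M b -> Cbox M c -> forall d, 0 <= d -> cdle b c d ->
     forall w, Rabs (P b w - P c w) <= L * d) ->
  forall M, exists L, 0 <= L /\ forall b c, Cbox M b -> Cbox M c -> forall d, 0 <= d -> cdle b c d ->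
     Rabs (G b - G c) <= L * d.
Proof.
  move=> HG HP M. have [L [L0 HL]] := HP M. exists L. split; auto.
  move=> b c Hb Hc d d0 Hd.
  have := tav_bound3 _ _ _ _ _ _ 0 (L * d) (HG b) (HG c) (HG c).
  rewrite Rmult_0_l Rminus_0_r. apply. move=> t. rewrite Rmult_0_l Rminus_0_r. by apply HL.
Qed.

Lemma rot_lip j M : exists L, 0 <= L /\ forall b c, Cbox M b -> Cbox M c -> forall d, 0 <= d -> cdle b c d ->
  forall w, Rabs (hx j (Phi (fun k => - w k) b) - hx j (Phi (fun k => - w k) c)) +
            Rabs (hy j (Phi (fun k => - w k) b) - hy j (Phi (fun k => - w k) c)) <= L * d.
Proof.
  have [L1 [L10 H1]] := box_lip n (2 * M) (hx j) (hxl j).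
  have [L2 [L20 H2]] := box_lip n (2 * M) (hy j) (hyl j).
  exists (2 * (L1 + L2)). split; first lra.
  move=> b c Hb Hc d d0 Hd w.
  have Bb := Phi_box n M (fun k => - w k) b Hb. have Bc := Phi_box n M (fun k => - w k) c Hc.
  have Cd := Phi_cdle n (fun k => - w k) b c d Hd.
  have := H1 _ _ Bb Bc (2 * d) ltac:(lra) Cd. have := H2 _ _ Bb Bc (2 * d) ltac:(lra) Cd.
  move=> *. lra.
Qed.

Lemma Gx_lip j M : exists L, 0 <= L /\ forall b c, Cbox M b -> Cbox M c -> forall d, 0 <= d -> cdle b c d ->
     Rabs (Gx j b - Gx j c) <= L * d.
Proof.
  apply (lip_of_P (fun b => Psnd b j)); first by move=> b; apply Gx_spec.
  move=> M'. have [L [L0 HL]] := rot_lip j M'. exists L. split; auto.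
  move=> b c Hb Hc d d0 Hd w. have := HL b c Hb Hc d d0 Hd w.
  rewrite !Psnd_eq.
  set A := hx j (Phi (fun k => - w k) b) - hx j (Phi (fun k => - w k) c).
  set B := hy j (Phi (fun k => - w k) b) - hy j (Phi (fun k => - w k) c).
  have -> : cos (w j) * hx j (Phi (fun k => - w k) b) + sin (w j) * - hy j (Phi (fun k => - w k) b) -
    (cos (w j) * hx j (Phi (fun k => - w k) c) + sin (w j) * - hy j (Phi (fun k => - w k) c)) = cos (w j) * A - sin (w j) * B
    by rewrite /A /B; ring.
  have [c1 s1] := cs_bnd (w j).
  have := abs_sub_le (cos (w j) * A) (sin (w j) * B). rewrite !Rabs_mult.
  have := Rabs_pos A. have := Rabs_pos B. move=> *. nra.
Qed.

Lemma Gy_lip j M : exists L, 0 <= L /\ forall b c, Cbox M b -> Cbox M c -> forall d, 0 <= d -> cdle b c d ->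
     Rabs (Gy j b - Gy j c) <= L * d.
Proof.
  have : exists L, 0 <= L /\ forall b c, Cbox M b -> Cbox M c -> forall d, 0 <= d -> cdle b c d ->
     Rabs (Fy j b - Fy j c) <= L * d.
  { apply (lip_of_P (fun b => Pfst b j)); first by move=> b; apply Fy_spec.
    move=> M'. have [L [L0 HL]] := rot_lip j M'. exists L. split; auto.
    move=> b c Hb Hc d d0 Hd w. have := HL b c Hb Hc d d0 Hd w.
    rewrite !Pfst_eq.
    set A := hx j (Phi (fun k => - w k) b) - hx j (Phi (fun k => - w k) c).
    set B := hy j (Phi (fun k => - w k) b) - hy j (Phi (fun k => - w k) c).
    have -> : cos (w j) * - hy j (Phi (fun k => - w k) b) + - (sin (w j) * hx j (Phi (fun k => - w k) b)) -
      (cos (w j) * - hy j (Phi (fun k => - w k) c) + - (sin (w j) * hx j (Phi (fun k => - w k) c))) = - (cos (w j) * B) - sin (w j) * A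
      by rewrite /A /B; ring.
    have [c1 s1] := cs_bnd (w j).
    have := abs_sub_le (- (cos (w j) * B)) (sin (w j) * A). rewrite Rabs_Ropp !Rabs_mult.
    have := Rabs_pos A. have := Rabs_pos B. move=> *. nra. }
  move=> [L [L0 HL]]. exists L. split; auto. move=> b c Hb Hc d d0 Hd.
  rewrite /Gy. have -> : - Fy j b - - Fy j c = - (Fy j b - Fy j c) by ring. rewrite Rabs_Ropp. by apply HL.
Qed.

Lemma cont_of_lip (G : Cn n -> R) :
  (forall M, exists L, 0 <= L /\ forall b c, Cbox M b -> Cbox M c -> forall d, 0 <= d -> cdle b c d ->
     Rabs (G b - G c) <= L * d) -> continuous_Cn G.
Proof.
  move=> HL a eps he. have [L [L0 H]] := HL (amax a + 1).
  exists (Rmin 1 (eps / (L + 1))). split.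
  { apply Rmin_glb_lt; [lra| apply Rdiv_lt_0_compat; lra]. }
  move=> b Hb.
  have d1 := Rmin_l 1 (eps / (L + 1)). have d2 := Rmin_r 1 (eps / (L + 1)).
  have Bb : Cbox (amax a + 1) b by (apply: Cbox_mono _ (near_box n _ _ _ _ (amax_box n a) Hb); lra).
  have Ba : Cbox (amax a + 1) a by (apply: Cbox_mono _ (amax_box n a); lra).
  have dpos : 0 <= Rmin 1 (eps / (L + 1)) by (apply Rmin_glb; [lra| left; apply Rdiv_lt_0_compat; lra]).
  have := H b a Bb Ba _ dpos (near_cdle n _ _ _ Hb).
  move=> H1. eapply Rle_lt_trans; [exact H1|].
  have : L * Rmin 1 (eps / (L + 1)) <= L * (eps / (L + 1)) by (apply Rmult_le_compat_l; auto).
  have : L * (eps / (L + 1)) < eps.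
  { have -> : L * (eps / (L + 1)) = eps - eps / (L + 1) by (field; lra).
    have : 0 < eps / (L + 1) by (apply Rdiv_lt_0_compat; lra). lra. }
  lra.
Qed.

Lemma lip_dz (j : 'I_n) (f : Cn n -> Defs.C) (G1 G2 : Cn n -> R) :
  (forall b, f b = (G1 b / 2, G2 b / 2)) ->
  (forall M, exists L, 0 <= L /\ forall b c, Cbox M b -> Cbox M c -> forall d, 0 <= d -> cdle b c d ->
     Rabs (G1 b - G1 c) <= L * d) ->
  (forall M, exists L, 0 <= L /\ forall b c, Cbox M b -> Cbox M c -> forall d, 0 <= d -> cdle b c d ->
     Rabs (G2 b - G2 c) <= L * d) ->
  loc_lipschitz f.
Proof.
  move=> Ef H1 H2 a. have [L1 [L10 K1]] := H1 (amax a + 1). have [L2 [L20 K2]] := H2 (amax a + 1).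
  exists 1, ((L1 + L2) / 2). split; first lra.
  move=> b c Hb Hc d Hd.
  have Bb : Cbox (amax a + 1) b by apply (near_box n _ _ _ _ (amax_box n a) Hb).
  have Bc : Cbox (amax a + 1) c by apply (near_box n _ _ _ _ (amax_box n a) Hc).
  have d0 : 0 <= d by (have [e1 _] := Hd j; have := Rabs_pos (fst (b j) - fst (c j)); lra).
  have := K1 b c Bb Bc d d0 Hd. have := K2 b c Bb Bc d d0 Hd. move=> e2 e1.
  eapply Rle_trans; [apply Cnorm_le|]. rewrite /Csub !Ef /=.
  have -> : G1 b / 2 - G1 c / 2 = (G1 b - G1 c) / 2 by field.
  have -> : G2 b / 2 - G2 c / 2 = (G2 b - G2 c) / 2 by field.
  have q : forall x, Rabs (x / 2) = Rabs x / 2.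
  { move=> x. rewrite /Rdiv Rabs_mult Rabs_inv (Rabs_right 2); lra. }
  rewrite !q. lra.
Qed.

End Main.


Theorem theorem5p1 (n : nat) (Lam : 'I_n -> R) (hLam : forall j, Lam j <> 0)
  (h : Cn n -> R) (hC : C11loc h)
  (hx hy : 'I_n -> Cn n -> R) (hpart : partials h hx hy) :
  exists H : Cn n -> R,
    (forall a : Cn n,
       time_avg_cv (fun t => h (Phi (fun j => - (Lam j * t)) a)) (H a)) /\
    C11loc H /\
    (forall Hx Hy : 'I_n -> Cn n -> R, partials H Hx Hy ->
       forall (a : Cn n) (j : 'I_n),
         (* 2 i d<h>/dabar_j (a) = (- H_y, H_x) = <<P>>_j(a) *)
         time_avg_cv (fun t => fst (flow_integrand Lam hx hy a t j)) (- Hy j a) /\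
         time_avg_cv (fun t => snd (flow_integrand Lam hx hy a t j)) (Hx j a)).
Proof.
  destruct hC as [fx [fy [Hp [Hc Hl]]]].
  have Ex : fx = hx.
  { apply functional_extensionality => j. apply functional_extensionality => a.
    exact (uniqueness_limite _ _ _ _ (proj1 (Hp a j)) (proj1 (hpart a j))). }
  have Ey : fy = hy.
  { apply functional_extensionality => j. apply functional_extensionality => a.
    exact (uniqueness_limite _ _ _ _ (proj2 (Hp a j)) (proj2 (hpart a j))). }
  subst fx fy.
  have hxc : forall j, continuous_Cn (hx j) by move=> j; apply (Hc j).
  have hyc : forall j, continuous_Cn (hy j) by move=> j; apply (Hc j).
  have hxl : forall j, loc_lip_R (hx j).
  { move=> j p. have [r [L [r0 HL]]] := proj1 (Hl j) p. exists r, (2 * L). split; auto.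
    move=> b c Hb Hc' d Hd. have H1 := HL b c Hb Hc' d Hd.
    have H3 := Rle_trans _ _ _ (Cnorm_fst (Csub (dz_of hx hy j b) (dz_of hx hy j c))) H1.
    rewrite /Csub /dz_of /= in H3.
    have e : hx j b / 2 - hx j c / 2 = (hx j b - hx j c) / 2 by field.
    rewrite e /Rdiv Rabs_mult Rabs_inv (Rabs_right 2) in H3; lra. }
  have hyl : forall j, loc_lip_R (hy j).
  { move=> j p. have [r [L [r0 HL]]] := proj2 (Hl j) p. exists r, (2 * L). split; auto.
    move=> b c Hb Hc' d Hd. have H1 := HL b c Hb Hc' d Hd.
    have H3 := Rle_trans _ _ _ (Cnorm_snd (Csub (dzbar_of hx hy j b) (dzbar_of hx hy j c))) H1.
    rewrite /Csub /dzbar_of /= in H3.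
    have e : hy j b / 2 - hy j c / 2 = (hy j b - hy j c) / 2 by field.
    rewrite e /Rdiv Rabs_mult Rabs_inv (Rabs_right 2) in H3; lra. }
  set GX := Gx n hx hy hxc hyc Lam. set GY := Gy n hx hy hxc hyc Lam.
  exists (Hf n h hx hy hpart hxc hyc Lam). split; [|split].
  - move=> a. exact (Hf_spec n h hx hy hpart hxc hyc Lam a).
  - exists GX, GY. split; [|split].
    + move=> a j. split; [apply Hf_deriv_x|apply Hf_deriv_y].
    + move=> j. split; apply cont_of_lip; [apply (Gx_lip n hx hy hxc hyc hxl hyl)|apply (Gy_lip n hx hy hxc hyc hxl hyl)].
    + move=> j. split.
      * apply (lip_dz n j _ (GX j) (fun b => - GY j b)).
        -- move=> b. rewrite /dz_of /=. f_equal. try (rewrite /Rdiv; ring).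
        -- apply (Gx_lip n hx hy hxc hyc hxl hyl).
        -- move=> M. have [L [L0 HL]] := Gy_lip n hx hy hxc hyc hxl hyl Lam j M. exists L. split; auto.
           move=> b c Hb Hc' d d0 Hd. have -> : - GY j b - - GY j c = - (GY j b - GY j c) by ring.
           rewrite Rabs_Ropp. by apply HL.
      * apply (lip_dz n j _ (GX j) (GY j)).
        -- move=> b. by rewrite /dzbar_of.
        -- apply (Gx_lip n hx hy hxc hyc hxl hyl).
        -- apply (Gy_lip n hx hy hxc hyc hxl hyl).
  - move=> Hx Hy HP a j.
    have e1 : Hx j a = GX j a.
    { exact (uniqueness_limite _ _ _ _ (proj1 (HP a j)) (Hf_deriv_x n h hx hy hpart hxc hyc Lam a j)). }
    have e2 : Hy j a = GY j a.
    { exact (uniqueness_limite _ _ _ _ (proj2 (HP a j)) (Hf_deriv_y n h hx hy hpart hxc hyc Lam a j)). }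
    rewrite e1 e2 /GY /Gy Ropp_involutive. split.
    + exact (Fy_spec n hx hy hxc hyc Lam j a).
    + exact (Gx_spec n hx hy hxc hyc Lam j a).
Qed.
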